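(* As formal power series in $q$ whose coefficients are polynomials in $z$ (equivalently, as an identity of analytic functions for $|q|<1$ and $|z|$ sufficiently small), \[ \sum_{n=1}^{\infty} \frac{q^n}{(zq^n;q)_{n+1}\,(zq^{2n+2};q^2)_{\infty}} =\sum_{n=0}^{\infty} \frac{z^nq^{2n^2+2n+1}}{(q;q^2)_{n+1}\,(zq;q^2)_{n+1}}, \] and \[ \sum_{n=0}^{\infty} q^n\,(-zq^{n+1};q)_{n}\,(-zq^{2n+2};q^2)_{\infty} =\sum_{n=0}^{\infty} \frac{z^n q^{n^2+n}}{(q;q^2)_{n+1}}. \]
   Context: For $a$ and $q$, $(a;q)_0:=1$, $(a;q)_n:=(1-a)(1-aq)\cdots(1-aq^{n-1})$ for $n\ge1$, and $(a;q)_\infty:=\lim_{n\to\infty}(a;q)_n$ for $|q|<1$. *)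

(* Defs.v *)
From Stdlib Require Import Reals.
From Coquelicot Require Import Coquelicot.

Open Scope C_scope.

Fixpoint cpow (x : Complex.C) (n : nat) : Complex.C :=
  match n with
  | O => RtoC 1
  | S m => Cmult x (cpow x m)
  end.

(* finite q-Pochhammer symbol (a;q)_n = (1-a)(1-aq)...(1-aq^(n-1)) *)
Fixpoint qpoch (a q : Complex.C) (n : nat) : Complex.C :=
  match n with
  | O => RtoC 1
  | S m => Cmult (qpoch a q m) (Cminus (RtoC 1) (Cmult a (cpow q m)))
  end.

Definition is_qpoch_inf (a q P : Complex.C) : Prop :=
  filterlim (fun n => qpoch a q n) eventually (locally P).

Definition qpoch_inf (a q : Complex.C) : Complex.C :=
  @lim C_CompleteNormedModule (filtermap (fun n => qpoch a q n) eventually).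

(* Main.v *)
Require Import Defs.
From Stdlib Require Import Reals Lra Lia.
From Coquelicot Require Import Coquelicot.
Open Scope C_scope.

Lemma cpow_add x m n : cpow x (m + n) = cpow x m * cpow x n.
Proof. induction m; simpl. ring. rewrite IHm. ring. Qed.

Lemma cpow_mul x y n : cpow (x*y) n = cpow x n * cpow y n.
Proof. induction n; simpl. ring. rewrite IHn. ring. Qed.

Lemma Cmod_cpow x n : Cmod (cpow x n) = (Cmod x ^ n)%R.
Proof. induction n; simpl. apply Cmod_1. rewrite Cmod_mult, IHn. ring. Qed.

Lemma qpoch_S a p n : qpoch a p (S n) = qpoch a p n * (1 - a * cpow p n).
Proof. reflexivity. Qed.

Lemma qpoch_head a p n : qpoch a p (S n) = (1 - a) * qpoch (a*p) p n.
Proof.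
  induction n.
  - simpl. ring.
  - rewrite qpoch_S, IHn. simpl. ring.
Qed.

Lemma Cmod_1m_le y : (Cmod (1 - y) <= 1 + Cmod y)%R.
Proof. unfold Cminus. eapply Rle_trans. apply Cmod_triangle. rewrite Cmod_opp, Cmod_1. lra. Qed.

Lemma Cmod_1p_le y : (Cmod (1 + y) <= 1 + Cmod y)%R.
Proof. eapply Rle_trans. apply Cmod_triangle. rewrite Cmod_1. lra. Qed.

Lemma Cmod_1m_ge y : (1 - Cmod y <= Cmod (1 - y))%R.
Proof.
  assert (H := Cmod_triangle (1 - y) y).
  replace (1 - y + y) with (RtoC 1) in H by ring. rewrite Cmod_1 in H. lra.
Qed.

Lemma Cmod_1p_ge y : (1 - Cmod y <= Cmod (1 + y))%R.
Proof.
  assert (H := Cmod_1m_ge (- y)). rewrite Cmod_opp in H.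
  replace (1 - - y) with (1 + y) in H by ring. exact H.
Qed.


Lemma pow_le1 x n : (0 <= x <= 1)%R -> (x ^ n <= 1)%R.
Proof. intros H. induction n; simpl. lra. assert (0 <= x ^ n)%R by (apply pow_le; lra). nra. Qed.

Lemma pow_decr x m n : (0 <= x <= 1)%R -> (m <= n)%nat -> (x ^ n <= x ^ m)%R.
Proof.
  intros H Hmn. induction Hmn. lra. simpl.
  assert (0 <= x ^ m0)%R by (apply pow_le; lra). nra.
Qed.

Lemma exp_mono x y : (x <= y)%R -> (exp x <= exp y)%R.
Proof. intros H. destruct (Rle_lt_or_eq_dec _ _ H) as [h|h]. left. apply exp_increasing. exact h. subst. lra. Qed.

Definition gs (x : R) (n : nat) : R := ((1 - x ^ n) / (1 - x))%R.

Lemma gs_S x n : x <> 1%R -> gs x (S n) = (gs x n + x ^ n)%R.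
Proof. intros H. unfold gs. simpl. field. lra. Qed.

Lemma gs_bounds x n : (0 <= x < 1)%R -> (0 <= gs x n <= / (1 - x))%R.
Proof.
  intros H. unfold gs. assert (0 <= x ^ n <= 1)%R.
  { split. apply pow_le; lra. apply pow_le1; lra. }
  split.
  - apply Rmult_le_pos. lra. left. apply Rinv_0_lt_compat. lra.
  - unfold Rdiv. rewrite <- (Rmult_1_l (/ (1 - x))) at 2.
    apply Rmult_le_compat_r. left. apply Rinv_0_lt_compat. lra. lra.
Qed.

Lemma gs_0 x : gs x 0 = 0%R.
Proof. unfold gs. simpl. unfold Rdiv. ring. Qed.

Section QF.
Variables (a p : C).
Hypothesis Hp : (Cmod p < 1)%R.
Let al := Cmod a.
Let pi := Cmod p.

Lemma pi_bounds : (0 <= pi < 1)%R.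
Proof. split. apply Cmod_ge_0. exact Hp. Qed.

Lemma Cmod_ap n : Cmod (a * cpow p n) = (al * pi ^ n)%R.
Proof. rewrite Cmod_mult, Cmod_cpow. reflexivity. Qed.

Lemma QF1 n : (Cmod (qpoch a p n) <= exp (al * gs pi n))%R.
Proof.
  induction n.
  - simpl. rewrite gs_0, Rmult_0_r, exp_0, Cmod_1. lra.
  - rewrite qpoch_S, Cmod_mult, gs_S by (pose proof pi_bounds; lra).
    rewrite Rmult_plus_distr_l, exp_plus.
    apply Rmult_le_compat. apply Cmod_ge_0. apply Cmod_ge_0. exact IHn.
    eapply Rle_trans. apply Cmod_1m_le. rewrite Cmod_ap.
    eapply Rle_trans. 2: apply exp_ineq1_le. lra.
Qed.

Lemma QF2 n : (Cmod (qpoch a p n - 1) <= exp (al * gs pi n) * (al * gs pi n))%R.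
Proof.
  induction n.
  - simpl. rewrite gs_0. replace (1 - 1) with (RtoC 0) by ring. rewrite Cmod_0. lra.
  - replace (qpoch a p (S n) - 1) with ((qpoch a p n - 1) + - (qpoch a p n * (a * cpow p n))).
    2: { rewrite qpoch_S. ring. }
    eapply Rle_trans. apply Cmod_triangle. rewrite Cmod_opp, Cmod_mult, Cmod_ap.
    pose proof (QF1 n) as H1. pose proof pi_bounds.
    rewrite gs_S by lra.
    assert (Hg := gs_bounds pi n pi_bounds).
    assert (0 <= al) by apply Cmod_ge_0.
    assert (0 <= pi ^ n)%R by (apply pow_le; lra).
    assert (Hm : (exp (al * gs pi n) <= exp (al * (gs pi n + pi ^ n)))%R).
    { apply exp_mono. nra. }
    assert (0 <= al * gs pi n)%R by nra.
    assert (0 < exp (al * gs pi n))%R by apply exp_pos.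
    assert (0 <= al * pi ^ n)%R by nra.
    assert (Cmod (qpoch a p n) * (al * pi ^ n) <= exp (al * gs pi n) * (al * pi ^ n))%R
      by (apply Rmult_le_compat_r; lra).
    assert (exp (al * gs pi n) * (al * (gs pi n + pi ^ n)) <= exp (al * (gs pi n + pi ^ n)) * (al * (gs pi n + pi ^ n)))%R
      by (apply Rmult_le_compat_r; nra).
    nra.
Qed.

Lemma one_minus_exp_bound (al' t : R) : (0 <= al' < 1)%R -> (0 <= t <= 1)%R ->
  (exp (- (al' / (1 - al') * t)) <= 1 - al' * t)%R.
Proof.
  intros H1 H2.
  assert (Hk : (al' * t / (1 - al' * t) <= al' / (1 - al') * t)%R).
  { unfold Rdiv. 
    assert (0 < 1 - al' * t)%R by nra. assert (0 < 1 - al')%R by lra.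
    replace (al' * / (1 - al') * t)%R with (al' * t * / (1 - al'))%R by ring.
    apply Rmult_le_compat_l. nra. apply Rinv_le_contravar. lra. nra. }
  assert (He : (/ (1 - al' * t) <= exp (al' / (1 - al') * t))%R).
  { eapply Rle_trans. 2: apply exp_ineq1_le.
    replace (/ (1 - al' * t))%R with (1 + al' * t / (1 - al' * t))%R. lra.
    field. nra. }
  rewrite exp_Ropp.
  assert (0 < 1 - al' * t)%R by nra.
  assert (0 < exp (al' / (1 - al') * t))%R by apply exp_pos.
  apply Rmult_le_reg_r with (exp (al' / (1 - al') * t)). exact H0.
  rewrite Rinv_l by lra.
  apply Rmult_le_reg_l with (/ (1 - al' * t))%R. apply Rinv_0_lt_compat; lra.
  rewrite <- Rmult_assoc, Rinv_l by lra. lra.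
Qed.

Lemma QF3 n : (al < 1)%R -> (exp (- (al / (1 - al) * gs pi n)) <= Cmod (qpoch a p n))%R.
Proof.
  intros Ha. induction n.
  - simpl. rewrite gs_0, Rmult_0_r, Ropp_0, exp_0, Cmod_1. lra.
  - rewrite qpoch_S, Cmod_mult, gs_S by (pose proof pi_bounds; lra).
    rewrite Rmult_plus_distr_l, Ropp_plus_distr, exp_plus.
    pose proof pi_bounds. assert (0 <= al) by apply Cmod_ge_0.
    assert (0 <= pi ^ n <= 1)%R by (split; [apply pow_le; lra | apply pow_le1; lra]).
    apply Rmult_le_compat. left; apply exp_pos. left; apply exp_pos. exact IHn.
    eapply Rle_trans. apply one_minus_exp_bound. split; assumption. exact H1.
    rewrite <- Cmod_ap. eapply Rle_trans. 2: apply Cmod_1m_ge. lra.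
Qed.

End QF.

Lemma lim_eps (x : nat -> C) (l : C) :
  filterlim x eventually (locally l) <->
  (forall eps : R, (0 < eps)%R -> exists N, forall n, (N <= n)%nat -> (Cmod (x n - l) < eps)%R).
Proof.
  rewrite filterlim_locally_ball_norm. split.
  - intros H eps He. destruct (H (mkposreal eps He)) as [N HN].
    exists N. intros n Hn. apply HN. exact Hn.
  - intros H eps. destruct (H eps (cond_pos eps)) as [N HN]. exists N.
    intros n Hn. apply HN. exact Hn.
Qed.

Lemma cauchy_conv (x : nat -> C) :
  (forall eps : R, (0 < eps)%R -> exists N, forall n, (N <= n)%nat -> (Cmod (x n - x N) < eps)%R) ->
  filterlim x eventually (locally (@lim C_CompleteNormedModule (filtermap x eventually))).
Proof.
  intros H.
  apply filterlim_locally. intros eps.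
  apply (complete_cauchy (T := C_CompleteNormedModule) (filtermap x eventually)).
  - apply filtermap_proper_filter. apply eventually_filter.
  - intros e. destruct (H e (cond_pos e)) as [N HN]. exists (x N).
    exists N. intros n Hn. apply (norm_compat1 (K := C_AbsRing) (V := C_NormedModule)). apply HN. exact Hn.
Qed.

Lemma lim_unique (x : nat -> C) (l : C) :
  filterlim x eventually (locally l) ->
  @lim C_CompleteNormedModule (filtermap x eventually) = l.
Proof.
  intros Hl.
  assert (H : filterlim x eventually (locally (@lim C_CompleteNormedModule (filtermap x eventually)))).
  { apply filterlim_locally. intros eps.
    apply (complete_cauchy (T := C_CompleteNormedModule) (filtermap x eventually)).
    - apply filtermap_proper_filter. apply eventually_filter.
    - intros e. exists l. assert (Hb := proj1 (filterlim_locally (F := eventually) (U := C_UniformSpace) x l) Hl e).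
      exact Hb. }
  assert (HP : ProperFilter' (@eventually)) by (apply Proper_StrongProper; apply eventually_filter).
  exact (@filterlim_locally_unique nat C_AbsRing C_NormedModule eventually HP x _ _ H Hl).
Qed.

Lemma lim_closed (x : nat -> C) (l c : C) (B : R) :
  filterlim x eventually (locally l) -> (forall n, (Cmod (x n - c) <= B)%R) -> (Cmod (l - c) <= B)%R.
Proof.
  intros Hl HB. apply Rle_plus_epsilon. intros eps He.
  rewrite lim_eps in Hl. destruct (Hl eps He) as [N HN].
  specialize (HN N (le_n N)). specialize (HB N).
  replace (l - c) with ((x N - c) + - (x N - l)) by ring.
  eapply Rle_trans. apply Cmod_triangle. rewrite Cmod_opp. lra.
Qed.

Lemma lim_closed_ge (x : nat -> C) (l : C) (B : R) :
  filterlim x eventually (locally l) -> (forall n, (B <= Cmod (x n))%R) -> (B <= Cmod l)%R.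
Proof.
  intros Hl HB. apply Rle_plus_epsilon. intros eps He.
  rewrite lim_eps in Hl. destruct (Hl eps He) as [N HN].
  specialize (HN N (le_n N)). specialize (HB N).
  assert (Ht := Cmod_triangle l (x N - l)).
  replace (l + (x N - l)) with (x N) in Ht by ring. lra.
Qed.

Lemma pow_small (x : R) (y : R) : (0 <= x < 1)%R -> (0 < y)%R ->
  exists N, forall n, (N <= n)%nat -> (x ^ n < y)%R.
Proof.
  intros Hx Hy. destruct (pow_lt_1_zero x ltac:(rewrite Rabs_pos_eq; lra) y Hy) as [N HN].
  exists N. intros n Hn. specialize (HN n Hn). rewrite Rabs_pos_eq in HN. exact HN.
  apply pow_le; lra.
Qed.

Section QI.
Variables (a p : C).
Hypothesis Hp : (Cmod p < 1)%R.
Let al := Cmod a.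
Let pi := Cmod p.
Let E := exp (al / (1 - pi)).

Lemma QF1' n : (Cmod (qpoch a p n) <= E)%R.
Proof.
  eapply Rle_trans. apply QF1. exact Hp. apply exp_mono.
  pose proof (gs_bounds pi n (pi_bounds p Hp)). pose proof (Cmod_ge_0 a).
  unfold Rdiv. apply Rmult_le_compat_l. exact H0. apply H.
Qed.

Lemma qpoch_diff N j : (Cmod (qpoch a p (N + j) - qpoch a p N) <= E * al * pi ^ N * gs pi j)%R.
Proof.
  pose proof (pi_bounds p Hp) as Hpi. fold pi in Hpi.
  induction j.
  - rewrite Nat.add_0_r. replace (qpoch a p N - qpoch a p N) with (RtoC 0) by ring.
    rewrite Cmod_0, gs_0. lra.
  - rewrite Nat.add_succ_r, qpoch_S, gs_S by lra.
    replace (qpoch a p (N + j) * (1 - a * cpow p (N + j)) - qpoch a p N)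
      with ((qpoch a p (N + j) - qpoch a p N) + - (qpoch a p (N + j) * (a * cpow p (N + j)))) by ring.
    eapply Rle_trans. apply Cmod_triangle. rewrite Cmod_opp, Cmod_mult, Cmod_ap.
    fold al pi. rewrite pow_add.
    assert (0 <= al) by apply Cmod_ge_0.
    assert (0 <= pi ^ N)%R by (apply pow_le; lra).
    assert (0 <= pi ^ j)%R by (apply pow_le; lra).
    assert (Cmod (qpoch a p (N + j)) * (al * (pi ^ N * pi ^ j)) <= E * (al * (pi ^ N * pi ^ j)))%R.
    { apply Rmult_le_compat_r. apply Rmult_le_pos. lra. apply Rmult_le_pos; lra. apply QF1'. }
    nra.
Qed.

Lemma QI0 : filterlim (qpoch a p) eventually (locally (qpoch_inf a p)).
Proof.
  unfold qpoch_inf. apply cauchy_conv.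
  intros eps He.
  pose proof (pi_bounds p Hp) as Hpi. fold pi in Hpi.
  assert (HE : (0 < E)%R) by apply exp_pos.
  assert (0 <= al) by apply Cmod_ge_0.
  destruct (pow_small pi (eps * (1 - pi) / (E * al + 1)) Hpi) as [N HN].
  { apply Rmult_lt_0_compat. apply Rmult_lt_0_compat; lra. apply Rinv_0_lt_compat. nra. }
  exists N. intros n Hn.
  replace n with (N + (n - N))%nat by lia.
  eapply Rle_lt_trans. apply qpoch_diff.
  specialize (HN N (le_n N)).
  pose proof (gs_bounds pi (n - N) Hpi).
  assert (0 <= pi ^ N)%R by (apply pow_le; lra).
  assert (E * al * pi ^ N * gs pi (n - N) <= E * al * pi ^ N * / (1 - pi))%R.
  { apply Rmult_le_compat_l. apply Rmult_le_pos. apply Rmult_le_pos; lra. lra. apply H0. }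
  eapply Rle_lt_trans. exact H2.
  assert (Hlt : (pi ^ N * (E * al + 1) < eps * (1 - pi))%R).
  { apply Rmult_lt_reg_r with (/ (E * al + 1))%R. apply Rinv_0_lt_compat; nra.
    rewrite Rmult_assoc, Rinv_r by nra. lra. }
  apply Rmult_lt_reg_r with (1 - pi)%R. lra.
  rewrite Rmult_assoc, Rinv_l by lra. nra.
Qed.

Lemma QI1 : (Cmod (qpoch_inf a p) <= E)%R.
Proof.
  replace (qpoch_inf a p) with (qpoch_inf a p - 0) by ring.
  apply (lim_closed (qpoch a p)). exact QI0. intros n. replace (qpoch a p n - 0) with (qpoch a p n) by ring.
  apply QF1'.
Qed.

Lemma QI2 : (Cmod (qpoch_inf a p - 1) <= E * (al / (1 - pi)))%R.
Proof.
  apply (lim_closed (qpoch a p)). exact QI0. intros n.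
  eapply Rle_trans. apply QF2. exact Hp. fold al pi.
  pose proof (gs_bounds pi n (pi_bounds p Hp)). pose proof (Cmod_ge_0 a). fold al in H0.
  assert (al * gs pi n <= al / (1 - pi))%R by (unfold Rdiv; apply Rmult_le_compat_l; [lra | apply H]).
  apply Rmult_le_compat. left; apply exp_pos. nra. apply exp_mono. exact H1. exact H1.
Qed.

Lemma QI3 : (al < 1)%R -> (exp (- (al / (1 - al) / (1 - pi))) <= Cmod (qpoch_inf a p))%R.
Proof.
  intros Ha. apply (lim_closed_ge (qpoch a p)). exact QI0. intros n.
  eapply Rle_trans. 2: apply QF3; assumption. apply exp_mono. fold al pi.
  pose proof (gs_bounds pi n (pi_bounds p Hp)). pose proof (Cmod_ge_0 a). fold al in H0.
  apply Ropp_le_contravar. unfold Rdiv at 2. apply Rmult_le_compat_l.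
  apply Rmult_le_pos. lra. left. apply Rinv_0_lt_compat. lra. apply H.
Qed.

End QI.

Lemma filterlim_shift (x : nat -> C) l : filterlim x eventually (locally l) ->
  filterlim (fun n => x (S n)) eventually (locally l).
Proof.
  rewrite !lim_eps. intros H eps He. destruct (H eps He) as [N HN]. exists N. intros n Hn. apply HN. lia.
Qed.

Lemma filterlim_cmul (x : nat -> C) l c : filterlim x eventually (locally l) ->
  filterlim (fun n => c * x n) eventually (locally (c * l)).
Proof.
  rewrite !lim_eps. intros H eps He.
  destruct (H (eps / (Cmod c + 1))%R) as [N HN].
  { apply Rdiv_lt_0_compat. lra. pose proof (Cmod_ge_0 c). lra. }
  exists N. intros n Hn. specialize (HN n Hn).
  replace (c * x n - c * l) with (c * (x n - l)) by ring. rewrite Cmod_mult.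
  pose proof (Cmod_ge_0 c). pose proof (Cmod_ge_0 (x n - l)).
  apply Rle_lt_trans with ((Cmod c + 1) * Cmod (x n - l))%R. nra.
  apply Rmult_lt_reg_l with (/ (Cmod c + 1))%R. apply Rinv_0_lt_compat; lra.
  rewrite <- Rmult_assoc, Rinv_l by lra. unfold Rdiv in HN. lra.
Qed.

Lemma QI4 a p : (Cmod p < 1)%R -> qpoch_inf a p = (1 - a) * qpoch_inf (a * p) p.
Proof.
  intros Hp.
  assert (HP : ProperFilter' (@eventually)) by (apply Proper_StrongProper; apply eventually_filter).
  assert (H1 : filterlim (fun n => qpoch a p (S n)) eventually (locally (qpoch_inf a p))).
  { apply filterlim_shift. apply QI0. exact Hp. }
  assert (H2 : filterlim (fun n => qpoch a p (S n)) eventually (locally ((1 - a) * qpoch_inf (a * p) p))).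
  { eapply filterlim_ext. 2: apply filterlim_cmul; apply QI0; exact Hp.
    intros n. symmetry. apply qpoch_head. }
  exact (@filterlim_locally_unique nat C_AbsRing C_NormedModule eventually HP _ _ _ H1 H2).
Qed.

Definition SeriesC (a : nat -> C) : C := @lim C_CompleteNormedModule (filtermap (sum_n a) eventually).

Lemma is_seriesC_unique (a : nat -> C) l l' : is_series a l -> is_series a l' -> l = l'.
Proof.
  intros H1 H2.
  assert (HP : ProperFilter' (@eventually)) by (apply Proper_StrongProper; apply eventually_filter).
  exact (@filterlim_locally_unique nat C_AbsRing C_NormedModule eventually HP _ _ _ H1 H2).
Qed.

Lemma SeriesC_correct (a : nat -> C) l : is_series a l -> SeriesC a = l.
Proof. intros H. apply lim_unique. exact H. Qed.

Lemma series_exists (a : nat -> C) (M pi : R) : (0 <= pi < 1)%R ->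
  (forall n, (Cmod (a n) <= M * pi ^ n)%R) -> is_series a (SeriesC a).
Proof.
  intros Hpi Ha.
  assert (Hex : ex_series (K := C_AbsRing) (V := C_CompleteNormedModule) a).
  { apply (ex_series_le (K := C_AbsRing) (V := C_CompleteNormedModule) a (fun n => M * pi ^ n)%R).
    intros n. apply Ha. apply (ex_series_scal_l (K := R_AbsRing) (V := R_NormedModule)).
    apply ex_series_geom. rewrite Rabs_pos_eq; lra. }
  destruct Hex as [l Hl]. rewrite (SeriesC_correct a l Hl). exact Hl.
Qed.

Lemma sum_n_tele (w : nat -> C) N : sum_n (fun n => w n - w (S n)) N = w O - w (S N).
Proof.
  induction N.
  - rewrite sum_O. reflexivity.
  - rewrite sum_Sn, IHN. simpl. unfold plus. simpl. ring.
Qed.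

Lemma tele (u w : nat -> C) (M pi : R) : (0 <= pi < 1)%R ->
  (forall n, u n = w n - w (S n)) -> (forall n, (Cmod (w n) <= M * pi ^ n)%R) ->
  is_series u (w O).
Proof.
  intros Hpi Hu Hw. unfold is_series.
  assert (HS : forall N, w O - w (S N) = sum_n u N).
  { intros N. rewrite (sum_n_ext _ _ N Hu). symmetry. apply sum_n_tele. }
  apply filterlim_ext with (f := fun N => w O - w (S N)). exact HS.
  apply lim_eps. intros eps He.
  assert (HM : (0 <= M)%R). { specialize (Hw O). simpl in Hw. pose proof (Cmod_ge_0 (w O)). lra. }
  destruct (pow_small pi (eps / (M + 1)) Hpi) as [N HN]. apply Rdiv_lt_0_compat; lra.
  exists N. intros n Hn.
  replace (w 0%nat - w (S n) - w 0%nat) with (- w (S n)) by ring. rewrite Cmod_opp.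
  eapply Rle_lt_trans. apply Hw.
  assert (pi ^ S n < eps / (M + 1))%R by (apply HN; lia).
  assert (0 <= pi ^ S n)%R by (apply pow_le; lra).
  apply Rle_lt_trans with ((M + 1) * pi ^ S n)%R. nra.
  apply Rmult_lt_reg_l with (/ (M + 1))%R. apply Rinv_0_lt_compat; lra.
  rewrite <- Rmult_assoc, Rinv_l by lra. unfold Rdiv in H. lra.
Qed.

Lemma series_lin (a b : nat -> C) la lb c : is_series a la -> is_series b lb ->
  is_series (fun n => a n + c * b n) (la + c * lb).
Proof.
  intros Ha Hb.
  apply (is_series_plus (K := C_AbsRing) (V := C_NormedModule) a (fun n => c * b n) la (c * lb)).
  exact Ha. apply (is_series_scal (K := C_AbsRing) (V := C_NormedModule) c b lb). exact Hb.
Qed.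

Lemma series_ext (a b : nat -> C) l : (forall n, a n = b n) -> is_series a l -> is_series b l.
Proof. intros H. apply is_series_ext. exact H. Qed.

Lemma series_bound (a : nat -> C) l (K pi : R) : (0 <= pi < 1)%R -> is_series a l ->
  (forall n, (Cmod (a n) <= K * pi ^ n)%R) -> (Cmod l <= K / (1 - pi))%R.
Proof.
  intros Hpi Hl Ha.
  replace l with (l - 0) by ring.
  apply (lim_closed (sum_n a)). exact Hl.
  intros N. assert (E0 : forall x : C, x - 0 = x) by (intros; ring). rewrite E0.
  assert (HK : (0 <= K)%R). { specialize (Ha O). simpl in Ha. pose proof (Cmod_ge_0 (a O)). lra. }
  assert (forall N, Cmod (sum_n a N) <= K * gs pi (S N))%R.
  { induction N0.
    - rewrite sum_O. eapply Rle_trans. apply Ha. unfold gs. simpl. right. field. lra.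
    - rewrite sum_Sn. unfold plus. simpl. eapply Rle_trans. apply Cmod_triangle.
      rewrite (gs_S pi (S N0)) by lra. specialize (Ha (S N0)). nra. }
  eapply Rle_trans. apply H. unfold Rdiv. apply Rmult_le_compat_l. exact HK. apply gs_bounds. exact Hpi.
Qed.

Lemma small_zero (m C pi : R) : (0 <= pi < 1)%R -> (0 <= m)%R -> (0 <= C)%R ->
  (exists k0, forall k, (k0 <= k)%nat -> (m <= C * pi ^ k)%R) -> m = 0%R.
Proof.
  intros Hpi Hm HC [k0 Hk].
  destruct (Rle_lt_or_eq_dec _ _ Hm) as [Hp|Hp]; [|auto].
  exfalso.
  destruct (pow_small pi (m / (C + 1)) Hpi) as [N HN]. apply Rdiv_lt_0_compat; lra.
  specialize (Hk (max k0 N) (Nat.le_max_l _ _)).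
  specialize (HN (max k0 N) (Nat.le_max_r _ _)).
  assert (0 <= pi ^ max k0 N)%R by (apply pow_le; lra).
  assert (C * pi ^ max k0 N <= C * (m / (C + 1)))%R by (apply Rmult_le_compat_l; lra).
  assert (C * (m / (C + 1)) < m)%R.
  { unfold Rdiv. apply Rmult_lt_reg_r with (C + 1)%R. lra.
    rewrite Rmult_assoc, Rmult_assoc, Rinv_l by lra. nra. }
  lra.
Qed.

Lemma eventually_small (z : C) (pi d : R) : (0 <= pi < 1)%R -> (0 < d)%R ->
  exists k0, forall k, (k0 <= k)%nat -> (Cmod z * pi ^ k < d)%R.
Proof.
  intros Hpi Hd.
  destruct (pow_small pi (d / (Cmod z + 1)) Hpi) as [N HN].
  { apply Rdiv_lt_0_compat. lra. pose proof (Cmod_ge_0 z). lra. }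
  exists N. intros k Hk. specialize (HN k Hk).
  pose proof (Cmod_ge_0 z). assert (0 <= pi ^ k)%R by (apply pow_le; lra).
  apply Rle_lt_trans with ((Cmod z + 1) * pi ^ k)%R. nra.
  apply Rmult_lt_reg_l with (/ (Cmod z + 1))%R. apply Rinv_0_lt_compat; lra.
  rewrite <- Rmult_assoc, Rinv_l by lra. unfold Rdiv in HN. lra.
Qed.

Lemma Cmod_zp (z p : C) k : Cmod (z * cpow p k) = (Cmod z * Cmod p ^ k)%R.
Proof. rewrite Cmod_mult, Cmod_cpow. reflexivity. Qed.

Lemma Cminus_eq0 (x y : C) : x - y = 0 -> x = y.
Proof. intros H. replace x with (x - y + y) by ring. rewrite H. ring. Qed.

Lemma uniq_core (p : C) (r : R) (F G : C -> C) (a0 a1 b0 b1 c lam : C) :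
  (Cmod p < 1)%R -> (0 < r)%R ->
  (forall z, (Cmod z < r)%R ->
     (a0 + a1 * z) * F z - (b0 + b1 * z) * F (z * p) - c =
     (a0 + a1 * (z * p)) * F (z * p) - (b0 + b1 * (z * p)) * F (z * p * p) - c) ->
  (forall z, (Cmod z < r)%R -> (a0 + a1 * z) * G z - (b0 + b1 * z) * G (z * p) = c) ->
  a0 * lam - b0 * lam - c = 0 ->
  (exists d K, (0 < d)%R /\ forall w, (Cmod w < d)%R -> (Cmod (F w - lam) <= K * Cmod w)%R) ->
  (exists d K, (0 < d)%R /\ forall w, (Cmod w < d)%R -> (Cmod (G w - lam) <= K * Cmod w)%R) ->
  (forall z, (Cmod z < r)%R -> a0 + a1 * z <> 0) ->
  (exists d, (0 < d)%R /\ forall w, (Cmod w < d)%R -> (Cmod (b0 + b1 * w) <= Cmod (a0 + a1 * w))%R) ->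
  forall z, (Cmod z < r)%R -> F z = G z.
Proof.
  intros Hp Hr HF2 HG1 Hlam [dF [KF [HdF HLF]]] [dG [KG [HdG HLG]]] Hal [db [Hdb Hbe]].
  set (pi := Cmod p). assert (Hpi : (0 <= pi < 1)%R) by (split; [apply Cmod_ge_0 | exact Hp]).
  set (uF := fun z => (a0 + a1 * z) * F z - (b0 + b1 * z) * F (z * p) - c).
  assert (HKF : (0 <= KF)%R).
  { specialize (HLF (RtoC (dF/2)%R)). rewrite Cmod_R, Rabs_pos_eq in HLF by lra.
    assert (H := HLF ltac:(lra)). pose proof (Cmod_ge_0 (F (dF / 2)%R - lam)). nra. }
  assert (HKG : (0 <= KG)%R).
  { specialize (HLG (RtoC (dG/2)%R)). rewrite Cmod_R, Rabs_pos_eq in HLG by lra.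
    assert (H := HLG ltac:(lra)). pose proof (Cmod_ge_0 (G (dG / 2)%R - lam)). nra. }
  assert (Hinv : forall z, (Cmod z < r)%R -> forall k, uF z = uF (z * cpow p k)).
  { intros z Hz k. induction k.
    - simpl. f_equal. ring.
    - rewrite IHk. unfold uF. rewrite HF2.
      + replace (z * cpow p (S k)) with (z * cpow p k * p) by (simpl; ring). reflexivity.
      + rewrite Cmod_zp. fold pi. assert (0 <= pi ^ k <= 1)%R by (split; [apply pow_le; lra| apply pow_le1; lra]).
        pose proof (Cmod_ge_0 z). nra. }
  set (d1 := Rmin 1 (Rmin dF r)).
  assert (Hd1 : (0 < d1)%R) by (unfold d1; repeat apply Rmin_pos; lra).
  set (CU := ((Cmod a0 + Cmod a1 + Cmod b0 + Cmod b1) * KF + Cmod (a1 - b1) * Cmod lam)%R).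
  assert (HCU : (0 <= CU)%R).
  { unfold CU. pose proof (Cmod_ge_0 a0). pose proof (Cmod_ge_0 a1). pose proof (Cmod_ge_0 b0).
    pose proof (Cmod_ge_0 b1). pose proof (Cmod_ge_0 (a1 - b1)). pose proof (Cmod_ge_0 lam). nra. }
  assert (Hub : forall w, (Cmod w < d1)%R -> (Cmod (uF w) <= CU * Cmod w)%R).
  { intros w Hw.
    assert (Hw1 : (Cmod w < 1)%R) by (eapply Rlt_le_trans; [exact Hw| apply Rmin_l]).
    assert (Hw2 : (Cmod w < dF)%R).
    { eapply Rlt_le_trans. exact Hw. unfold d1. eapply Rle_trans. apply Rmin_r. apply Rmin_l. }
    assert (Hwp : (Cmod (w * p) <= Cmod w)%R).
    { rewrite Cmod_mult. pose proof (Cmod_ge_0 w). fold pi. nra. }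
    unfold uF.
    replace ((a0 + a1 * w) * F w - (b0 + b1 * w) * F (w * p) - c) with
      ((a0 + a1 * w) * (F w - lam) + - ((b0 + b1 * w) * (F (w * p) - lam)) + (a1 - b1) * w * lam
       + (a0 * lam - b0 * lam - c)) by ring.
    rewrite Hlam, Cplus_0_r.
    assert (HA : (Cmod (a0 + a1 * w) <= Cmod a0 + Cmod a1)%R).
    { eapply Rle_trans. apply Cmod_triangle. rewrite Cmod_mult. pose proof (Cmod_ge_0 a1). pose proof (Cmod_ge_0 w). nra. }
    assert (HB : (Cmod (b0 + b1 * w) <= Cmod b0 + Cmod b1)%R).
    { eapply Rle_trans. apply Cmod_triangle. rewrite Cmod_mult. pose proof (Cmod_ge_0 b1). pose proof (Cmod_ge_0 w). nra. }
    assert (H1 := HLF w Hw2).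
    assert (H2 := HLF (w * p) ltac:(lra)).
    set (Xt := (a0 + a1 * w) * (F w - lam)). set (Yt := (b0 + b1 * w) * (F (w * p) - lam)).
    set (Zt := (a1 - b1) * w * lam).
    assert (T1 := Cmod_triangle (Xt + - Yt) Zt). assert (T2 := Cmod_triangle Xt (-Yt)). rewrite Cmod_opp in T2.
    assert (EX : Cmod Xt = (Cmod (a0 + a1 * w) * Cmod (F w - lam))%R) by (unfold Xt; apply Cmod_mult).
    assert (EY : Cmod Yt = (Cmod (b0 + b1 * w) * Cmod (F (w * p)%C - lam))%R) by (unfold Yt; apply Cmod_mult).
    assert (EZ : Cmod Zt = (Cmod (a1 - b1) * Cmod w * Cmod lam)%R) by (unfold Zt; rewrite !Cmod_mult; ring).
    pose proof (Cmod_ge_0 (F w - lam)). pose proof (Cmod_ge_0 (F (w * p) - lam)).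
    pose proof (Cmod_ge_0 (a0 + a1 * w)). pose proof (Cmod_ge_0 (b0 + b1 * w)).
    pose proof (Cmod_ge_0 (a1 - b1)). pose proof (Cmod_ge_0 lam). pose proof (Cmod_ge_0 w).
    pose proof (Cmod_ge_0 a0). pose proof (Cmod_ge_0 a1). pose proof (Cmod_ge_0 b0). pose proof (Cmod_ge_0 b1).
    assert (Cmod (a0 + a1 * w) * Cmod (F w - lam) <= (Cmod a0 + Cmod a1) * (KF * Cmod w))%R
      by (apply Rmult_le_compat; lra).
    assert (Cmod (b0 + b1 * w) * Cmod (F (w * p)%C - lam) <= (Cmod b0 + Cmod b1) * (KF * Cmod w))%R.
    { apply Rmult_le_compat; try lra. nra. }
    unfold CU. nra. }
  assert (HuF0 : forall z, (Cmod z < r)%R -> uF z = 0).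
  { intros z Hz. apply Cmod_eq_0.
    apply (small_zero _ (CU * Cmod z) pi Hpi (Cmod_ge_0 _)).
    pose proof (Cmod_ge_0 z). nra.
    destruct (eventually_small z pi d1 Hpi Hd1) as [k0 Hk0].
    exists k0. intros k Hk. rewrite (Hinv z Hz k).
    eapply Rle_trans. apply Hub. rewrite Cmod_zp. apply Hk0. exact Hk.
    rewrite Cmod_zp. fold pi. lra. }
  set (D := fun z => F z - G z).
  assert (HD : forall z, (Cmod z < r)%R -> (a0 + a1 * z) * D z = (b0 + b1 * z) * D (z * p)).
  { intros z Hz. assert (H1 := HuF0 z Hz). assert (H2 := HG1 z Hz). unfold uF in H1. unfold D.
    apply Cminus_eq0.
    transitivity (((a0 + a1 * z) * F z - (b0 + b1 * z) * F (z * p) - c) -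
                  ((a0 + a1 * z) * G z - (b0 + b1 * z) * G (z * p) - c)). ring.
    rewrite H1, H2. ring. }
  set (d2 := Rmin (Rmin dF dG) (Rmin db r)).
  assert (Hd2 : (0 < d2)%R) by (unfold d2; repeat apply Rmin_pos; lra).
  assert (Hd2F : (d2 <= dF)%R) by (unfold d2; eapply Rle_trans; [apply Rmin_l| apply Rmin_l]).
  assert (Hd2G : (d2 <= dG)%R) by (unfold d2; eapply Rle_trans; [apply Rmin_l| apply Rmin_r]).
  assert (Hd2b : (d2 <= db)%R) by (unfold d2; eapply Rle_trans; [apply Rmin_r| apply Rmin_l]).
  assert (Hd2r : (d2 <= r)%R) by (unfold d2; eapply Rle_trans; [apply Rmin_r| apply Rmin_r]).
  assert (HDmono : forall v, (Cmod v < d2)%R -> (Cmod (D v) <= Cmod (D (v * p)%C))%R).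
  { intros v Hv. assert (Hvr : (Cmod v < r)%R) by lra.
    assert (H1 := f_equal Cmod (HD v Hvr)). rewrite !Cmod_mult in H1.
    assert (H2 := Hbe v ltac:(lra)).
    assert (H3 : (0 < Cmod (a0 + a1 * v))%R) by (apply Cmod_gt_0; apply Hal; exact Hvr).
    pose proof (Cmod_ge_0 (D (v * p))). pose proof (Cmod_ge_0 (D v)).
    apply Rmult_le_reg_l with (Cmod (a0 + a1 * v)). exact H3. nra. }
  assert (HDlip : forall v, (Cmod v < d2)%R -> (Cmod (D v) <= (KF + KG) * Cmod v)%R).
  { intros v Hv. unfold D. replace (F v - G v) with ((F v - lam) + - (G v - lam)) by ring.
    eapply Rle_trans. apply Cmod_triangle. rewrite Cmod_opp.
    assert (H1 := HLF v ltac:(lra)). assert (H2 := HLG v ltac:(lra)). lra. }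
  assert (HDsmall : forall w, (Cmod w < d2)%R -> D w = 0).
  { intros w Hw. apply Cmod_eq_0.
    apply (small_zero _ ((KF + KG) * Cmod w) pi Hpi (Cmod_ge_0 _)).
    pose proof (Cmod_ge_0 w). nra.
    exists O. intros k _.
    assert (Hit : forall k, (Cmod (D w) <= Cmod (D (w * cpow p k)%C))%R).
    { induction k0.
      - simpl. replace (w * 1) with w by ring. lra.
      - eapply Rle_trans. exact IHk0.
        replace (w * cpow p (S k0)) with (w * cpow p k0 * p) by (simpl; ring).
        apply HDmono. rewrite Cmod_zp. fold pi.
        assert (0 <= pi ^ k0 <= 1)%R by (split; [apply pow_le; lra| apply pow_le1; lra]).
        pose proof (Cmod_ge_0 w). nra. }
    eapply Rle_trans. apply (Hit k). eapply Rle_trans. apply HDlip.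
    rewrite Cmod_zp. fold pi. assert (0 <= pi ^ k <= 1)%R by (split; [apply pow_le; lra| apply pow_le1; lra]).
    pose proof (Cmod_ge_0 w). nra.
    rewrite Cmod_zp. fold pi. lra. }
  assert (Hall : forall J z, (Cmod z < r)%R -> (Cmod (z * cpow p J) < d2)%R -> D z = 0).
  { induction J; intros z Hz HzJ.
    - simpl in HzJ. replace (z * 1) with z in HzJ by ring. apply HDsmall. exact HzJ.
    - assert (Hzp : (Cmod (z * p) < r)%R).
      { rewrite Cmod_mult. fold pi. pose proof (Cmod_ge_0 z). nra. }
      assert (H0 : D (z * p) = 0).
      { apply IHJ. exact Hzp. replace (z * p * cpow p J) with (z * cpow p (S J)) by (simpl; ring). exact HzJ. }
      assert (H1 := HD z Hz). rewrite H0, Cmult_0_r in H1.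
      destruct (Ceq_dec (D z) 0) as [e|e]. exact e. exfalso. exact (Cmult_neq_0 _ _ (Hal z Hz) e H1). }
  intros z Hz.
  destruct (eventually_small z pi d2 Hpi Hd2) as [k0 Hk0].
  assert (H := Hall k0 z Hz). rewrite Cmod_zp in H. specialize (H (Hk0 k0 (le_n _))).
  unfold D in H. apply (f_equal (fun t => t + G z)) in H. ring_simplify in H. exact H.
Qed.

Lemma ne0_plus y : (Cmod y < 1)%R -> 1 + y <> 0.
Proof. intros H E. pose proof (Cmod_1p_ge y). rewrite E, Cmod_0 in H0. lra. Qed.

Lemma ne0_minus y : (Cmod y < 1)%R -> 1 - y <> 0.
Proof. intros H E. pose proof (Cmod_1m_ge y). rewrite E, Cmod_0 in H0. lra. Qed.

Lemma inv_bound_plus y rho : (Cmod y <= rho)%R -> (rho < 1)%R -> (Cmod (/ (1 + y)) <= / (1 - rho))%R.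
Proof.
  intros H1 H2. rewrite Cmod_inv by (apply ne0_plus; lra).
  apply Rinv_le_contravar. lra. pose proof (Cmod_1p_ge y). lra.
Qed.

Lemma inv_bound_minus y rho : (Cmod y <= rho)%R -> (rho < 1)%R -> (Cmod (/ (1 - y)) <= / (1 - rho))%R.
Proof.
  intros H1 H2. rewrite Cmod_inv by (apply ne0_minus; lra).
  apply Rinv_le_contravar. lra. pose proof (Cmod_1m_ge y). lra.
Qed.

Lemma lip_series (a ls : nat -> C) l lam (K pi : R) : (0 <= pi < 1)%R -> is_series a l -> is_series ls lam ->
  (forall n, (Cmod (a n - ls n) <= K * pi ^ n)%R) -> (Cmod (l - lam) <= K / (1 - pi))%R.
Proof.
  intros Hpi Ha Hl Hb.
  assert (H := series_lin a ls l lam (-1) Ha Hl).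
  replace (l - lam) with (l + -1 * lam) by ring.
  apply (series_bound _ _ K pi Hpi H). intros n.
  replace (a n + -1 * ls n) with (a n - ls n) by ring. apply Hb.
Qed.

Lemma geom_series q : (Cmod q < 1)%R -> is_series (fun n => cpow q n) (/ (1 - q)).
Proof.
  intros Hq.
  assert (Hq1 : 1 - q <> 0) by (apply ne0_minus; exact Hq).
  replace (/ (1 - q)) with (cpow q 0 / (1 - q)) by (simpl; field; exact Hq1).
  apply (tele _ (fun n => cpow q n / (1 - q)) (Cmod (/ (1 - q))) (Cmod q)).
  split. apply Cmod_ge_0. exact Hq.
  intros n. simpl. field. exact Hq1.
  intros n. unfold Cdiv. rewrite Cmod_mult, Cmod_cpow. right. ring.
Qed.

Lemma Cmod_cpow_le1 q n : (Cmod q <= 1)%R -> (Cmod (cpow q n) <= 1)%R.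
Proof. intros H. rewrite Cmod_cpow. apply pow_le1. split. apply Cmod_ge_0. exact H. Qed.

Lemma Cmod_zX_le z q n : (Cmod q <= 1)%R -> (Cmod (z * cpow q n) <= Cmod z)%R.
Proof.
  intros H. rewrite Cmod_mult. pose proof (Cmod_cpow_le1 q n H). pose proof (Cmod_ge_0 z).
  pose proof (Cmod_ge_0 (cpow q n)). nra.
Qed.

Lemma cpow_2n2 q n : cpow q (2 * n + 2) = q * q * (cpow q n * cpow q n).
Proof. replace (2 * n + 2)%nat with (n + n + 2)%nat by lia. rewrite !cpow_add. simpl. ring. Qed.

Lemma Cmod_qq q : Cmod (q * q) = (Cmod q ^ 2)%R.
Proof. rewrite Cmod_mult. ring. Qed.

Section Prods.
Variable q : C.
Hypothesis Hq : (Cmod q < 1)%R.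
Let pi := Cmod q.

Lemma Hpi : (0 <= pi < 1)%R.
Proof. split. apply Cmod_ge_0. exact Hq. Qed.

Lemma Hqq : (Cmod (q * q) < 1)%R.
Proof. rewrite Cmod_qq. pose proof Hpi. fold pi. nra. Qed.

Definition E1 := exp (1 / (1 - pi)).
Definition E2 := exp (1 / (1 - pi ^ 2)).

Lemma pi2 : (0 <= pi ^ 2 < 1)%R.
Proof. pose proof Hpi. split; nra. Qed.

Lemma A_bound a n : (Cmod a <= 1)%R -> (Cmod (qpoch a q n) <= E1)%R.
Proof.
  intros Ha. eapply Rle_trans. apply QF1'. exact Hq. unfold E1. apply exp_mono.
  fold pi. pose proof Hpi. unfold Rdiv. apply Rmult_le_compat_r. left. apply Rinv_0_lt_compat. lra. exact Ha.
Qed.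

Lemma B_bound a : (Cmod a <= 1)%R -> (Cmod (qpoch_inf a (q * q)) <= E2)%R.
Proof.
  intros Ha. eapply Rle_trans. apply QI1. exact Hqq. unfold E2. apply exp_mono.
  rewrite Cmod_qq. fold pi. pose proof pi2. unfold Rdiv. apply Rmult_le_compat_r. left. apply Rinv_0_lt_compat. lra. exact Ha.
Qed.

Lemma A_lip a n t : (Cmod a <= t)%R -> (t <= 1)%R -> (Cmod (qpoch a q n - 1) <= E1 * (t / (1 - pi)))%R.
Proof.
  intros Ha Ht. eapply Rle_trans. apply QF2. exact Hq. fold pi.
  pose proof (gs_bounds pi n Hpi). pose proof (Cmod_ge_0 a). pose proof Hpi.
  assert (Cmod a * gs pi n <= t / (1 - pi))%R.
  { unfold Rdiv. apply Rmult_le_compat. lra. lra. lra. apply H. }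
  assert (t / (1 - pi) <= 1 / (1 - pi))%R.
  { unfold Rdiv. apply Rmult_le_compat_r. left. apply Rinv_0_lt_compat. lra. lra. }
  apply Rmult_le_compat. left; apply exp_pos. apply Rmult_le_pos; lra.
  unfold E1. apply exp_mono. lra. exact H2.
Qed.

Lemma B_lip a t : (Cmod a <= t)%R -> (t <= 1)%R -> (Cmod (qpoch_inf a (q * q) - 1) <= E2 * (t / (1 - pi ^ 2)))%R.
Proof.
  intros Ha Ht. eapply Rle_trans. apply QI2. exact Hqq. rewrite Cmod_qq. fold pi.
  pose proof pi2. pose proof (Cmod_ge_0 a).
  assert (Cmod a / (1 - pi ^ 2) <= t / (1 - pi ^ 2))%R.
  { unfold Rdiv. apply Rmult_le_compat_r. left. apply Rinv_0_lt_compat. lra. lra. }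
  assert (t / (1 - pi ^ 2) <= 1 / (1 - pi ^ 2))%R.
  { unfold Rdiv. apply Rmult_le_compat_r. left. apply Rinv_0_lt_compat. lra. lra. }
  apply Rmult_le_compat. left; apply exp_pos. apply Rmult_le_pos. lra. left. apply Rinv_0_lt_compat. lra.
  unfold E2. apply exp_mono. lra. exact H1.
Qed.

Definition KL := (E1 * E2 / (1 - pi ^ 2) + E1 / (1 - pi))%R.

Lemma AB_lip a1 a2 n t : (Cmod a1 <= t)%R -> (Cmod a2 <= t)%R -> (t <= 1)%R ->
  (Cmod (qpoch a1 q n * qpoch_inf a2 (q * q) - 1) <= t * KL)%R.
Proof.
  intros H1 H2 Ht.
  replace (qpoch a1 q n * qpoch_inf a2 (q * q) - 1) with
    (qpoch a1 q n * (qpoch_inf a2 (q * q) - 1) + (qpoch a1 q n - 1)) by ring.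
  eapply Rle_trans. apply Cmod_triangle. rewrite Cmod_mult.
  assert (Hc1 := A_bound a1 n ltac:(lra)). assert (Hc2 := B_lip a2 t H2 Ht). assert (Hc3 := A_lip a1 n t H1 Ht).
  pose proof (Cmod_ge_0 (qpoch a1 q n)). pose proof (Cmod_ge_0 (qpoch_inf a2 (q * q) - 1)).
  assert (HE1 : (0 < E1)%R) by apply exp_pos.
  assert (Cmod (qpoch a1 q n) * Cmod (qpoch_inf a2 (q * q) - 1) <= E1 * (E2 * (t / (1 - pi ^ 2))))%R
    by (apply Rmult_le_compat; lra).
  unfold KL. pose proof pi2. pose proof Hpi.
  replace (t * (E1 * E2 / (1 - pi ^ 2) + E1 / (1 - pi)))%R with
    (E1 * (E2 * (t / (1 - pi ^ 2))) + E1 * (t / (1 - pi)))%R by (field; lra).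
  lra.
Qed.

End Prods.

Definition tL (q z : C) (n : nat) : C :=
  Cmult (cpow q n)
    (Cmult (qpoch (Copp (Cmult z (cpow q (S n)))) q n)
           (qpoch_inf (Copp (Cmult z (cpow q (2 * n + 2)))) (Cmult q q))).

Section Second.
Variable q : C.
Hypothesis Hq : (Cmod q < 1)%R.

Lemma qpoch_two a n : qpoch a q (S (S n)) = (1 - a) * qpoch (a * q) q (S n).
Proof. apply qpoch_head. Qed.

Lemma tL_K1 z n : tL q z (S n) * (1 + z * (q * cpow q n)) =
  q * (1 + z * q * (cpow q n * cpow q n)) * tL q z n.
Proof.
  unfold tL. set (X := cpow q n).
  set (a := - (z * cpow q (S n))).
  assert (EA : (1 - a) * qpoch (a * q) q (S n) = qpoch a q n * (1 - a * X) * (1 - a * cpow q (S n))).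
  { rewrite <- qpoch_head. rewrite !qpoch_S. reflexivity. }
  assert (Ea : a * q = - (z * cpow q (S (S n)))) by (unfold a; simpl; ring).
  rewrite Ea in EA.
  rewrite (QI4 (- (z * cpow q (2 * n + 2))) (q * q) (Hqq q Hq)).
  assert (Eb : - (z * cpow q (2 * n + 2)) * (q * q) = - (z * cpow q (2 * S n + 2))).
  { rewrite !cpow_2n2. simpl. ring. }
  rewrite Eb.
  set (A1 := qpoch (- (z * cpow q (S (S n)))) q (S n)) in *.
  set (B1 := qpoch_inf (- (z * cpow q (2 * S n + 2))) (q * q)).
  transitivity (q * X * B1 * ((1 - a) * A1)).
  { unfold a. simpl. fold X. ring. }
  rewrite EA. unfold a. rewrite cpow_2n2. simpl. fold X. ring.
Qed.

Lemma tL_K2 z n : tL q (z * (q * q)) n * ((1 + z * q * cpow q n) * (1 + z * q * q * cpow q n)) =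
  (1 + z * q * (cpow q n * cpow q n)) * tL q z n.
Proof.
  unfold tL. set (X := cpow q n).
  set (a := - (z * cpow q (S n))).
  assert (EA : (1 - a) * ((1 - a * q) * qpoch (a * q * q) q n) = qpoch a q n * (1 - a * X) * (1 - a * cpow q (S n))).
  { rewrite <- qpoch_head. rewrite <- qpoch_head. rewrite !qpoch_S. reflexivity. }
  assert (Ea : a * q * q = - (z * (q * q) * cpow q (S n))) by (unfold a; simpl; ring).
  rewrite Ea in EA.
  rewrite (QI4 (- (z * cpow q (2 * n + 2))) (q * q) (Hqq q Hq)).
  assert (Eb : - (z * cpow q (2 * n + 2)) * (q * q) = - (z * (q * q) * cpow q (2 * n + 2))) by ring.
  rewrite Eb.
  set (A1 := qpoch (- (z * (q * q) * cpow q (S n))) q n) in *.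
  set (B1 := qpoch_inf (- (z * (q * q) * cpow q (2 * n + 2))) (q * q)).
  transitivity (X * B1 * ((1 - a) * ((1 - a * q) * A1))).
  { unfold a. simpl. fold X. ring. }
  rewrite EA. unfold a. rewrite cpow_2n2. simpl. fold X. ring.
Qed.

End Second.

Definition RcL (q z X : C) : C :=
  z * (X - 1) * (q * q + q * q * q - q * X + z * (q * q * q * q * q) * X) /
  ((1 + z * q * X) * (1 + z * q * q * X) * (1 + z * q * q * q * X)).

Ltac nzc := match goal with
  | H : ?a <> _ |- ?b <> _ => let E := fresh in intro E; cbv beta in E; apply H; eapply eq_trans; [|exact E]; ring
  end.
Ltac nzs := repeat split; nzc.

Lemma cert_alg (q z X T T1 Tp Tpp : C) :
  1 + z * q * X <> 0 -> 1 + z * q * q * X <> 0 -> 1 + z * q * q * q * X <> 0 -> 1 + z * q * q * q * q * X <> 0 ->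
  T1 * (1 + z * (q * X)) = q * (1 + z * q * (X * X)) * T ->
  Tp * ((1 + z * q * X) * (1 + z * q * q * X)) = (1 + z * q * (X * X)) * T ->
  Tpp * ((1 + z * (q * q) * q * X) * (1 + z * (q * q) * q * q * X)) = (1 + z * (q * q) * q * (X * X)) * Tp ->
  T - (1 + q + z * q * q) * Tp + q * (1 + z * q * q * q) * Tpp = RcL q z X * T - RcL q z (q * X) * T1.
Proof.
  intros h1 h2 h3 h4 e1 e2 e3.
  assert (f1 : T1 = q * (1 + z * q * (X * X)) * T / (1 + z * (q * X))).
  { rewrite <- e1. field. nzs. }
  assert (f2 : Tp = (1 + z * q * (X * X)) * T / ((1 + z * q * X) * (1 + z * q * q * X))).
  { rewrite <- e2. field. nzs. }
  assert (f3 : Tpp = (1 + z * (q * q) * q * (X * X)) * Tp / ((1 + z * (q * q) * q * X) * (1 + z * (q * q) * q * q * X))).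
  { rewrite <- e3. field. nzs. }
  rewrite f3, f2, f1. unfold RcL. field. nzs.
Qed.

Section SecondL.
Variable q : C.
Hypothesis Hq : (Cmod q < 1)%R.
Let pi := Cmod q.

Lemma Hpi' : (0 <= pi < 1)%R.
Proof. exact (Hpi q Hq). Qed.

Lemma Cmod_zqk_le z k : (Cmod (z * cpow q k) <= Cmod z)%R.
Proof. apply Cmod_zX_le. lra. Qed.

Lemma tL_bound z n : (Cmod z <= 1)%R -> (Cmod (tL q z n) <= E1 q * E2 q * pi ^ n)%R.
Proof.
  intros Hz. unfold tL. rewrite !Cmod_mult, Cmod_cpow. fold pi.
  assert (H1 := A_bound q Hq (- (z * cpow q (S n))) n). rewrite Cmod_opp in H1.
  specialize (H1 ltac:(eapply Rle_trans; [apply Cmod_zqk_le | exact Hz])).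
  assert (H2 := B_bound q Hq (- (z * cpow q (2 * n + 2)))). rewrite Cmod_opp in H2.
  specialize (H2 ltac:(eapply Rle_trans; [apply Cmod_zqk_le | exact Hz])).
  pose proof (Cmod_ge_0 (qpoch (- (z * cpow q (S n))) q n)).
  pose proof (Cmod_ge_0 (qpoch_inf (- (z * cpow q (2 * n + 2))) (q * q))).
  assert (0 <= pi ^ n)%R by (apply pow_le; apply Hpi').
  assert (Cmod (qpoch (- (z * cpow q (S n))) q n) * Cmod (qpoch_inf (- (z * cpow q (2 * n + 2))) (q * q)) <= E1 q * E2 q)%R
    by (apply Rmult_le_compat; lra).
  nra.
Qed.

Definition FL z := SeriesC (tL q z).

Lemma FL_conv z : (Cmod z <= 1)%R -> is_series (tL q z) (FL z).
Proof. intros Hz. apply (series_exists _ (E1 q * E2 q) pi Hpi'). intros n. apply tL_bound. exact Hz. Qed.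

Lemma tL_lip w n : (Cmod w <= 1)%R -> (Cmod (tL q w n - cpow q n) <= Cmod w * KL q * pi ^ n)%R.
Proof.
  intros Hw. unfold tL.
  replace (cpow q n * (qpoch (- (w * cpow q (S n))) q n * qpoch_inf (- (w * cpow q (2 * n + 2))) (q * q)) - cpow q n)
    with (cpow q n * (qpoch (- (w * cpow q (S n))) q n * qpoch_inf (- (w * cpow q (2 * n + 2))) (q * q) - 1)) by ring.
  rewrite Cmod_mult, Cmod_cpow. fold pi.
  assert (H := AB_lip q Hq (- (w * cpow q (S n))) (- (w * cpow q (2 * n + 2))) n (Cmod w)).
  rewrite !Cmod_opp in H. specialize (H (Cmod_zqk_le _ _) (Cmod_zqk_le _ _) Hw).
  assert (0 <= pi ^ n)%R by (apply pow_le; apply Hpi'). nra.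
Qed.

Lemma FL_lip : exists d K, (0 < d)%R /\ forall w, (Cmod w < d)%R -> (Cmod (FL w - / (1 - q)) <= K * Cmod w)%R.
Proof.
  exists 1%R, (KL q / (1 - pi))%R. split. lra. intros w Hw.
  assert (H := lip_series (tL q w) (fun n => cpow q n) (FL w) (/ (1 - q)) (Cmod w * KL q) pi Hpi'
     (FL_conv w ltac:(lra)) (geom_series q Hq)).
  replace (KL q / (1 - pi) * Cmod w)%R with (Cmod w * KL q / (1 - pi))%R by (unfold Rdiv; ring).
  apply H. intros n. apply tL_lip. lra.
Qed.

Lemma Cmod_zqX z k n : (Cmod z < 1)%R -> (Cmod (z * cpow q k * cpow q n) < 1)%R.
Proof.
  intros Hz. rewrite !Cmod_mult, !Cmod_cpow. fold pi.
  assert (0 <= pi ^ k <= 1)%R by (split; [apply pow_le; apply Hpi' | apply pow_le1; pose proof Hpi'; lra]).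
  assert (0 <= pi ^ n <= 1)%R by (split; [apply pow_le; apply Hpi' | apply pow_le1; pose proof Hpi'; lra]).
  pose proof (Cmod_ge_0 z).
  assert (Cmod z * pi ^ k <= Cmod z)%R by nra.
  assert (0 <= Cmod z * pi ^ k)%R by nra.
  nra.
Qed.

Lemma RcL_bound z X : (Cmod z < 1)%R -> (Cmod X <= 1)%R ->
  (Cmod (RcL q z X) <= 8 * (/ (1 - Cmod z)) ^ 3)%R.
Proof.
  intros Hz HX. unfold RcL, Cdiv.
  assert (Hk : forall k, (Cmod (z * cpow q k * X) <= Cmod z)%R).
  { intros k. rewrite !Cmod_mult, Cmod_cpow. fold pi.
    assert (0 <= pi ^ k <= 1)%R by (split; [apply pow_le; apply Hpi' | apply pow_le1; pose proof Hpi'; lra]).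
    pose proof (Cmod_ge_0 z). pose proof (Cmod_ge_0 X).
    assert (Cmod z * pi ^ k <= Cmod z)%R by nra. assert (0 <= Cmod z * pi ^ k)%R by nra. nra. }
  assert (G1 : (1 - Cmod z <= Cmod (1 + z * q * X))%R).
  { eapply Rle_trans. 2: apply Cmod_1p_ge. replace (z * q * X) with (z * cpow q 1 * X) by (simpl; ring). specialize (Hk 1%nat). lra. }
  assert (G2 : (1 - Cmod z <= Cmod (1 + z * q * q * X))%R).
  { eapply Rle_trans. 2: apply Cmod_1p_ge. replace (z * q * q * X) with (z * cpow q 2 * X) by (simpl; ring). specialize (Hk 2%nat). lra. }
  assert (G3 : (1 - Cmod z <= Cmod (1 + z * q * q * q * X))%R).
  { eapply Rle_trans. 2: apply Cmod_1p_ge. replace (z * q * q * q * X) with (z * cpow q 3 * X) by (simpl; ring). specialize (Hk 3%nat). lra. }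
  set (D := (1 + z * q * X) * (1 + z * q * q * X) * (1 + z * q * q * q * X)).
  assert (GD : ((1 - Cmod z) ^ 3 <= Cmod D)%R).
  { unfold D. rewrite !Cmod_mult. simpl. 
    assert (0 <= 1 - Cmod z)%R by lra.
    replace ((1 - Cmod z) * ((1 - Cmod z) * ((1 - Cmod z) * 1)))%R with ((1 - Cmod z) * (1 - Cmod z) * (1 - Cmod z))%R by ring.
    apply Rmult_le_compat; try nra. all: try (apply Rmult_le_compat; lra). }
  assert (HD : D <> 0).
  { intro E. rewrite E, Cmod_0 in GD. assert (0 < (1 - Cmod z) ^ 3)%R by (apply pow_lt; lra). lra. }
  rewrite Cmod_mult, Cmod_inv by exact HD.
  assert (N1 : (Cmod (X - 1) <= 2)%R).
  { unfold Cminus. eapply Rle_trans. apply Cmod_triangle. rewrite Cmod_opp, Cmod_1. lra. }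
  assert (N2 : (Cmod (q * q + q * q * q - q * X + z * (q * q * q * q * q) * X) <= 4)%R).
  { assert (Hq1 : (Cmod q <= 1)%R) by lra.
    assert (A1 : (Cmod (q * q) <= 1)%R) by (rewrite Cmod_mult; pose proof (Cmod_ge_0 q); nra).
    assert (A2 : (Cmod (q * q * q) <= 1)%R) by (rewrite Cmod_mult; pose proof (Cmod_ge_0 q); pose proof (Cmod_ge_0 (q*q)); nra).
    assert (A3 : (Cmod (q * X) <= 1)%R) by (rewrite Cmod_mult; pose proof (Cmod_ge_0 q); pose proof (Cmod_ge_0 X); nra).
    assert (A4 : (Cmod (z * (q * q * q * q * q) * X) <= 1)%R).
    { replace (z * (q * q * q * q * q) * X) with (z * cpow q 5 * X) by (simpl; ring). specialize (Hk 5%nat). lra. }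
    unfold Cminus. eapply Rle_trans. apply Cmod_triangle. eapply Rle_trans. apply Rplus_le_compat_r.
    eapply Rle_trans. apply Cmod_triangle. apply Rplus_le_compat_l. rewrite Cmod_opp. apply Rle_refl.
    eapply Rle_trans. apply Rplus_le_compat_r. apply Rplus_le_compat_r. apply Cmod_triangle. lra. }
  rewrite !Cmod_mult.
  pose proof (Cmod_ge_0 z). pose proof (Cmod_ge_0 (X - 1)).
  pose proof (Cmod_ge_0 (q * q + q * q * q - q * X + z * (q * q * q * q * q) * X)).
  assert (Cmod z * Cmod (X - 1) * Cmod (q * q + q * q * q - q * X + z * (q * q * q * q * q) * X) <= 8)%R.
  { assert (Cmod z * Cmod (X - 1) <= 2)%R by nra. nra. }
  assert (0 <= Cmod z * Cmod (X - 1) * Cmod (q * q + q * q * q - q * X + z * (q * q * q * q * q) * X))%R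
    by (apply Rmult_le_pos; [apply Rmult_le_pos|]; lra).
  assert (P3 : (0 < (1 - Cmod z) ^ 3)%R) by (apply pow_lt; lra).
  rewrite <- Rinv_pow by lra.
  apply Rmult_le_compat; try lra. left; apply Rinv_0_lt_compat; lra.
  apply Rinv_le_contravar; lra.
Qed.

Lemma nz_k z k n : (Cmod z < 1)%R -> 1 + z * cpow q k * cpow q n <> 0.
Proof. intros Hz. apply ne0_plus. apply Cmod_zqX. exact Hz. Qed.

Lemma FL_eq2 z : (Cmod z < 1)%R ->
  FL z - (1 + q + z * q * q) * FL (z * (q * q)) + q * (1 + z * q * q * q) * FL (z * (q * q) * (q * q)) = 0.
Proof.
  intros Hz.
  assert (Hz1 : (Cmod z <= 1)%R) by lra.
  assert (Hzp : (Cmod (z * (q * q)) <= 1)%R).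
  { rewrite Cmod_mult, Cmod_qq. fold pi. pose proof Hpi'. pose proof (Cmod_ge_0 z). nra. }
  assert (Hzpp : (Cmod (z * (q * q) * (q * q)) <= 1)%R).
  { rewrite Cmod_mult, Cmod_qq. fold pi. pose proof Hpi'. pose proof (Cmod_ge_0 (z * (q * q))). nra. }
  assert (S1 := series_lin _ _ _ _ (- (1 + q + z * q * q)) (FL_conv z Hz1) (FL_conv _ Hzp)).
  assert (S2 := series_lin _ _ _ _ (q * (1 + z * q * q * q)) S1 (FL_conv _ Hzpp)).
  assert (S3 : is_series (fun n => tL q z n + - (1 + q + z * q * q) * tL q (z * (q * q)) n +
                   q * (1 + z * q * q * q) * tL q (z * (q * q) * (q * q)) n)
              (RcL q z (cpow q 0) * tL q z 0)).
  { apply (tele _ (fun n => RcL q z (cpow q n) * tL q z n) (8 * (/ (1 - Cmod z)) ^ 3 * (E1 q * E2 q)) pi Hpi').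
    - intros n.
      assert (h1 := nz_k z 1 n Hz). assert (h2 := nz_k z 2 n Hz). assert (h3 := nz_k z 3 n Hz). assert (h4 := nz_k z 4 n Hz).
      simpl in h1, h2, h3, h4.
      assert (E := cert_alg q z (cpow q n) (tL q z n) (tL q z (S n)) (tL q (z * (q * q)) n) (tL q (z * (q * q) * (q * q)) n)).
      simpl cpow at 2.
      rewrite <- E.
      + ring.
      + nzs.
      + nzs.
      + nzs.
      + nzs.
      + apply tL_K1. exact Hq.
      + apply tL_K2. exact Hq.
      + assert (K := tL_K2 q Hq (z * (q * q)) n). rewrite K. reflexivity.
    - intros n. rewrite Cmod_mult.
      assert (H1 := RcL_bound z (cpow q n) Hz (Cmod_cpow_le1 q n ltac:(lra))).
      assert (H2 := tL_bound z n Hz1).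
      pose proof (Cmod_ge_0 (RcL q z (cpow q n))). pose proof (Cmod_ge_0 (tL q z n)).
      assert (0 <= 8 * (/ (1 - Cmod z)) ^ 3)%R.
      { apply Rmult_le_pos. lra. apply pow_le. left. apply Rinv_0_lt_compat. lra. }
      assert (0 <= pi ^ n)%R by (apply pow_le; apply Hpi').
      assert (0 <= E1 q * E2 q)%R by (apply Rmult_le_pos; left; apply exp_pos).
      replace (8 * (/ (1 - Cmod z)) ^ 3 * (E1 q * E2 q) * pi ^ n)%R
        with ((8 * (/ (1 - Cmod z)) ^ 3) * (E1 q * E2 q * pi ^ n))%R by ring.
      apply Rmult_le_compat; lra. }
  assert (c0 : cpow q 0 = 1) by reflexivity.
  assert (E0 : RcL q z (cpow q 0) * tL q z 0 = 0) by (rewrite c0; unfold RcL, Cdiv; ring).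
  rewrite E0 in S3.
  assert (U := is_seriesC_unique _ _ _ S2 S3).
  rewrite <- U. ring.
Qed.

End SecondL.

Definition tR (q z : C) (n : nat) : C :=
  Cdiv (Cmult (cpow z n) (cpow q (n * n + n))) (qpoch q (Cmult q q) (S n)).

Section SecondR.
Variable q : C.
Hypothesis Hq : (Cmod q < 1)%R.
Let pi := Cmod q.

Definition c0q := exp (- (Cmod q / (1 - Cmod q) / (1 - Cmod q ^ 2))).
Definition KR := (/ c0q)%R.

Lemma c0q_pos : (0 < c0q)%R.
Proof. apply exp_pos. Qed.

Lemma qpochq_lower n : (c0q <= Cmod (qpoch q (q * q) n))%R.
Proof.
  eapply Rle_trans. 2: apply QF3. 2: exact (Hqq q Hq). 2: exact Hq.
  unfold c0q. apply exp_mono. apply Ropp_le_contravar. rewrite Cmod_qq.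
  pose proof (Hpi q Hq). pose proof (pi2 q Hq).
  assert (0 <= Cmod q / (1 - Cmod q))%R by (apply Rmult_le_pos; [lra| left; apply Rinv_0_lt_compat; lra]).
  unfold Rdiv at 2. apply Rmult_le_compat_l. exact H1. apply gs_bounds. exact H0.
Qed.

Lemma qpochq_ne0 n : qpoch q (q * q) n <> 0.
Proof.
  intro E. pose proof (qpochq_lower n). rewrite E, Cmod_0 in H. pose proof c0q_pos. lra.
Qed.

Lemma inv_qpochq n : (Cmod (/ qpoch q (q * q) n) <= KR)%R.
Proof.
  rewrite Cmod_inv by apply qpochq_ne0. unfold KR. apply Rinv_le_contravar. apply c0q_pos. apply qpochq_lower.
Qed.

Lemma KR_pos : (0 < KR)%R.
Proof. unfold KR. apply Rinv_0_lt_compat. apply c0q_pos. Qed.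

Lemma tR_bound_gen z n : (Cmod (tR q z n) <= Cmod z ^ n * pi ^ n * KR)%R.
Proof.
  unfold tR, Cdiv. rewrite !Cmod_mult, !Cmod_cpow. fold pi.
  pose proof (Hpi q Hq). fold pi in H.
  assert (pi ^ (n * n + n) <= pi ^ n)%R by (apply pow_decr; [lra| lia]).
  assert (0 <= pi ^ (n * n + n))%R by (apply pow_le; lra).
  assert (0 <= Cmod z ^ n)%R by (apply pow_le; apply Cmod_ge_0).
  assert (H3 := inv_qpochq (S n)). pose proof (Cmod_ge_0 (/ qpoch q (q * q) (S n))).
  apply Rmult_le_compat; try nra. all: try (apply Rmult_le_compat_l; lra).
Qed.

Lemma tR_bound z n : (Cmod z <= 1)%R -> (Cmod (tR q z n) <= KR * pi ^ n)%R.
Proof.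
  intros Hz. eapply Rle_trans. apply tR_bound_gen.
  assert (Cmod z ^ n <= 1)%R by (apply pow_le1; split; [apply Cmod_ge_0| exact Hz]).
  assert (0 <= pi ^ n)%R by (apply pow_le; apply (Hpi q Hq)).
  pose proof KR_pos.
  assert (Cmod z ^ n * pi ^ n <= pi ^ n)%R by (rewrite <- (Rmult_1_l (pi ^ n)) at 2; apply Rmult_le_compat_r; lra).
  assert (0 <= Cmod z ^ n)%R by (apply pow_le; apply Cmod_ge_0).
  rewrite (Rmult_comm KR). apply Rmult_le_compat_r; lra.
Qed.

Definition GR z := SeriesC (tR q z).

Lemma GR_conv z : (Cmod z <= 1)%R -> is_series (tR q z) (GR z).
Proof. intros Hz. apply (series_exists _ KR pi (Hpi q Hq)). intros n. apply tR_bound. exact Hz. Qed.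

Definition lamR (l : C) (n : nat) : C := match n with O => l | S _ => 0 end.

Lemma lamR_series l : is_series (lamR l) l.
Proof.
  apply (tele (lamR l) (lamR l) (Cmod l) pi (Hpi q Hq)).
  - intros [|n]; simpl; ring.
  - intros [|n]; simpl. lra. rewrite Cmod_0. pose proof (Cmod_ge_0 l). pose proof (Hpi q Hq).
    fold pi in H0. assert (0 <= pi ^ n)%R by (apply pow_le; lra).
    apply Rmult_le_pos. lra. apply Rmult_le_pos; lra.
Qed.

Lemma tR0 z : tR q z 0 = / (1 - q).
Proof.
  unfold tR. change (cpow z 0) with (RtoC 1). change (cpow q (0 * 0 + 0)) with (RtoC 1).
  change (qpoch q (q * q) 1) with (RtoC 1 * (1 - q * RtoC 1)).
  field. apply ne0_minus. exact Hq.
Qed.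

Lemma tR_lip w n : (Cmod w <= 1)%R -> (Cmod (tR q w n - lamR (/ (1 - q)) n) <= Cmod w * KR * pi ^ n)%R.
Proof.
  intros Hw. destruct n as [|m].
  - simpl. rewrite tR0. replace (/ (1 - q) - / (1 - q)) with (RtoC 0) by ring. rewrite Cmod_0.
    pose proof KR_pos. pose proof (Cmod_ge_0 w). nra.
  - simpl lamR. replace (tR q w (S m) - 0) with (tR q w (S m)) by ring.
    eapply Rle_trans. apply tR_bound_gen.
    simpl. assert (Cmod w ^ m <= 1)%R by (apply pow_le1; split; [apply Cmod_ge_0| exact Hw]).
    assert (0 <= Cmod w ^ m)%R by (apply pow_le; apply Cmod_ge_0).
    assert (0 <= pi * pi ^ m)%R by (apply Rmult_le_pos; [apply Cmod_ge_0| apply pow_le; apply Cmod_ge_0]).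
    pose proof KR_pos. pose proof (Cmod_ge_0 w).
    assert (Cmod w * Cmod w ^ m <= Cmod w)%R by nra.
    replace (Cmod w * KR * (pi * pi ^ m))%R with (Cmod w * ((pi * pi ^ m) * KR))%R by ring.
    replace (Cmod w * Cmod w ^ m * (pi * pi ^ m) * KR)%R with ((Cmod w * Cmod w ^ m) * ((pi * pi ^ m) * KR))%R by ring.
    apply Rmult_le_compat_r. apply Rmult_le_pos; lra. assumption.
Qed.

Lemma GR_lip : exists d K, (0 < d)%R /\ forall w, (Cmod w < d)%R -> (Cmod (GR w - / (1 - q)) <= K * Cmod w)%R.
Proof.
  exists 1%R, (KR / (1 - pi))%R. split. lra. intros w Hw.
  assert (H := lip_series (tR q w) (lamR (/ (1 - q))) (GR w) (/ (1 - q)) (Cmod w * KR) pi (Hpi q Hq)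
     (GR_conv w ltac:(lra)) (lamR_series _)).
  replace (KR / (1 - pi) * Cmod w)%R with (Cmod w * KR / (1 - pi))%R by (unfold Rdiv; ring).
  apply H. intros n. apply tR_lip. lra.
Qed.

Lemma tR_shiftz z n : tR q (z * (q * q)) n = tR q z n * (cpow q n * cpow q n).
Proof. unfold tR. rewrite !cpow_mul. unfold Cdiv. ring. Qed.

Lemma tR_S z n : tR q z (S n) * (1 - q * (q * q * (cpow q n * cpow q n))) =
   tR q z n * (z * (q * q * (cpow q n * cpow q n))).
Proof.
  unfold tR.
  replace (S n * S n + S n)%nat with ((n * n + n) + (2 * n + 2))%nat by ring.
  rewrite cpow_add, cpow_2n2.
  rewrite (qpoch_S q (q * q) (S n)).
  change (cpow z (S n)) with (z * cpow z n).
  change (cpow (q * q) (S n)) with (q * q * cpow (q * q) n).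
  rewrite cpow_mul.
  assert (h1 := qpochq_ne0 (S n)).
  assert (h2 : 1 - q * (q * q * (cpow q n * cpow q n)) <> 0).
  { apply ne0_minus. rewrite !Cmod_mult, Cmod_cpow. fold pi. pose proof (Hpi q Hq). fold pi in H.
    assert (0 <= pi ^ n <= 1)%R by (split; [apply pow_le; lra | apply pow_le1; lra]). 
    assert (pi * (pi * pi * (pi ^ n * pi ^ n)) <= pi)%R.
    { assert (A1 : (0 <= pi * pi <= 1)%R) by (split; nra).
      assert (A2 : (0 <= pi ^ n * pi ^ n <= 1)%R) by (split; nra).
      assert (0 <= pi * pi * (pi ^ n * pi ^ n) <= 1)%R by (split; nra). nra. }
    lra. }
  field. split; assumption.
Qed.

Lemma GR_eq1 z : (Cmod z < 1)%R -> GR z - q * (1 + z * q) * GR (z * (q * q)) = 1.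
Proof.
  intros Hz.
  assert (Hz1 : (Cmod z <= 1)%R) by lra.
  assert (Hzp : (Cmod (z * (q * q)) <= 1)%R).
  { rewrite Cmod_mult, Cmod_qq. fold pi. pose proof (Hpi q Hq). pose proof (Cmod_ge_0 z). fold pi in H. nra. }
  assert (S1 := series_lin _ _ _ _ (- (q * (1 + z * q))) (GR_conv z Hz1) (GR_conv _ Hzp)).
  assert (S2 : is_series (fun n => tR q z n + - (q * (1 + z * q)) * tR q (z * (q * q)) n)
     ((1 - q * (cpow q 0 * cpow q 0)) * tR q z 0)).
  { apply (tele _ (fun n => (1 - q * (cpow q n * cpow q n)) * tR q z n) (2 * KR) pi (Hpi q Hq)).
    - intros n. rewrite tR_shiftz.
      assert (E := tR_S z n).
      change (cpow q (S n)) with (q * cpow q n).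
      replace ((1 - q * (q * cpow q n * (q * cpow q n))) * tR q z (S n)) with
        (tR q z (S n) * (1 - q * (q * q * (cpow q n * cpow q n)))) by ring.
      rewrite E. ring.
    - intros n. rewrite Cmod_mult.
      assert (H1 : (Cmod (1 - q * (cpow q n * cpow q n)) <= 2)%R).
      { unfold Cminus. eapply Rle_trans. apply Cmod_triangle. rewrite Cmod_opp, Cmod_1, !Cmod_mult, Cmod_cpow.
        fold pi. pose proof (Hpi q Hq). fold pi in H.
        assert (0 <= pi ^ n <= 1)%R by (split; [apply pow_le; lra | apply pow_le1; lra]).
        assert (0 <= pi ^ n * pi ^ n <= 1)%R by (split; nra). nra. }
      assert (H2 := tR_bound z n Hz1).
      pose proof (Cmod_ge_0 (1 - q * (cpow q n * cpow q n))). pose proof (Cmod_ge_0 (tR q z n)).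
      replace (2 * KR * pi ^ n)%R with (2 * (KR * pi ^ n))%R by ring.
      apply Rmult_le_compat; lra. }
  assert (E0 : (1 - q * (cpow q 0 * cpow q 0)) * tR q z 0 = 1).
  { rewrite tR0. change (cpow q 0) with (RtoC 1). field. apply ne0_minus. exact Hq. }
  rewrite E0 in S2.
  assert (U := is_seriesC_unique _ _ _ S1 S2).
  transitivity (GR z + - (q * (1 + z * q)) * GR (z * (q * q))). ring. exact U.
Qed.

End SecondR.

Lemma second_identity (q z : C) : (Cmod q < 1)%R -> (Cmod z < 1)%R ->
  exists T, is_series (tL q z) T /\ is_series (tR q z) T.
Proof.
  intros Hq Hz.
  exists (FL q z). split. apply FL_conv. exact Hq. lra.
  assert (E : FL q z = GR q z).
  { apply (uniq_core (q * q) 1 (FL q) (GR q) 1 0 q (q * q) 1 (/ (1 - q))).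
    - exact (Hqq q Hq).
    - lra.
    - intros w Hw. apply Cminus_eq0.
      transitivity (FL q w - (1 + q + w * q * q) * FL q (w * (q * q)) + q * (1 + w * q * q * q) * FL q (w * (q * q) * (q * q))).
      ring. apply FL_eq2; assumption.
    - intros w Hw. transitivity (GR q w - q * (1 + w * q) * GR q (w * (q * q))). ring. apply GR_eq1; assumption.
    - field. apply ne0_minus. exact Hq.
    - apply FL_lip. exact Hq.
    - apply GR_lip. exact Hq.
    - intros w Hw. replace (1 + 0 * w) with (RtoC 1) by ring. intro E. exact (C1_nz E).
    - exists (1 - Cmod q)%R. split. lra. intros w Hw.
      replace (1 + 0 * w) with (RtoC 1) by ring. rewrite Cmod_1.
      eapply Rle_trans. apply Cmod_triangle. rewrite !Cmod_mult.
      pose proof (Cmod_ge_0 q). pose proof (Cmod_ge_0 w).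
      assert (Cmod q * Cmod q * Cmod w <= Cmod q * Cmod q * (1 - Cmod q))%R
        by (apply Rmult_le_compat_l; nra).
      assert (Cmod q * Cmod q * (1 - Cmod q) <= Cmod q * (1 - Cmod q))%R
        by (apply Rmult_le_compat_r; nra).
      nra.
    - exact Hz. }
  rewrite E. apply GR_conv. exact Hq. lra.
Qed.

Definition t1L (q z : C) (m : nat) : C :=
  let n := S m in
  Cdiv (cpow q n)
       (Cmult (qpoch (Cmult z (cpow q n)) q (S n))
              (qpoch_inf (Cmult z (cpow q (2 * n + 2))) (Cmult q q))).

Definition V1 (q z : C) (m : nat) : C := qpoch (z * cpow q (S m)) q (S (S m)).
Definition B1 (q z : C) (m : nat) : C := qpoch_inf (z * cpow q (2 * S m + 2)) (q * q).

Lemma t1L_VB q z m : t1L q z m = cpow q (S m) / (V1 q z m * B1 q z m).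
Proof. reflexivity. Qed.

Section FirstL.
Variable q : C.
Hypothesis Hq : (Cmod q < 1)%R.

Lemma VB_K1 z m : (1 - z * cpow q (S m)) * (V1 q z (S m) * B1 q z (S m)) =
  V1 q z m * B1 q z m * (1 - z * q * (cpow q (S m) * cpow q (S m))).
Proof.
  unfold V1, B1. set (Y := cpow q (S m)). set (a := z * Y).
  assert (EA : (1 - a) * qpoch (a * q) q (S (S (S m))) =
     qpoch a q (S (S m)) * (1 - a * cpow q (S (S m))) * (1 - a * cpow q (S (S (S m))))).
  { rewrite <- qpoch_head. rewrite !qpoch_S. reflexivity. }
  assert (Ea : a * q = z * cpow q (S (S m))) by (unfold a, Y; simpl; ring).
  rewrite Ea in EA.
  rewrite (QI4 (z * cpow q (2 * S m + 2)) (q * q) (Hqq q Hq)).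
  assert (Eb : z * cpow q (2 * S m + 2) * (q * q) = z * cpow q (2 * S (S m) + 2)).
  { rewrite !cpow_2n2. simpl. ring. }
  rewrite Eb.
  set (A1 := qpoch (z * cpow q (S (S m))) q (S (S (S m)))) in *.
  set (Bb := qpoch_inf (z * cpow q (2 * S (S m) + 2)) (q * q)).
  transitivity (Bb * ((1 - a) * A1)). { unfold a. ring. }
  rewrite EA. unfold a, Y. rewrite cpow_2n2. simpl. ring.
Qed.

Lemma VB_K2 z m : (1 - z * cpow q (S m)) * (1 - z * q * cpow q (S m)) * (V1 q (z * (q * q)) m * B1 q (z * (q * q)) m) =
  V1 q z m * B1 q z m * (1 - z * q * (cpow q (S m) * cpow q (S m))).
Proof.
  unfold V1, B1. set (Y := cpow q (S m)). set (a := z * Y).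
  assert (EA : (1 - a) * ((1 - a * q) * qpoch (a * q * q) q (S (S m))) =
     qpoch a q (S (S m)) * (1 - a * cpow q (S (S m))) * (1 - a * cpow q (S (S (S m))))).
  { rewrite <- qpoch_head. rewrite <- qpoch_head. rewrite !qpoch_S. reflexivity. }
  assert (Ea : a * q * q = z * (q * q) * Y) by (unfold a; ring).
  rewrite Ea in EA.
  rewrite (QI4 (z * cpow q (2 * S m + 2)) (q * q) (Hqq q Hq)).
  assert (Eb : z * cpow q (2 * S m + 2) * (q * q) = z * (q * q) * cpow q (2 * S m + 2)) by ring.
  rewrite Eb.
  set (A1 := qpoch (z * (q * q) * Y) q (S (S m))) in *.
  set (Bb := qpoch_inf (z * (q * q) * cpow q (2 * S m + 2)) (q * q)).
  transitivity (Bb * ((1 - a) * ((1 - a * q) * A1))). { unfold a. ring. }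
  rewrite EA. unfold a, Y. rewrite cpow_2n2. simpl. ring.
Qed.

End FirstL.

Definition W1 (q z Y : C) : C := z * (Y - q) * (1 + q - q * (1 + z) * Y) / (1 - z * q * (Y * Y)).

Lemma cert1_alg (q z Y T T1 Tp Tpp : C) :
  1 - z * q * (Y * Y) <> 0 -> 1 - z * q * q * q * (Y * Y) <> 0 ->
  T1 * (1 - z * q * (Y * Y)) = q * (1 - z * Y) * T ->
  Tp * (1 - z * q * (Y * Y)) = (1 - z * Y) * (1 - z * q * Y) * T ->
  Tpp * (1 - z * (q * q) * q * (Y * Y)) = (1 - z * (q * q) * Y) * (1 - z * (q * q) * q * Y) * Tp ->
  (1 - z * q) * T - (1 + q - z * q * q * q) * Tp + q * Tpp = W1 q z Y * T - W1 q z (q * Y) * T1.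
Proof.
  intros h1 h2 e1 e2 e3.
  assert (f1 : T1 = q * (1 - z * Y) * T / (1 - z * q * (Y * Y))).
  { rewrite <- e1. field. nzs. }
  assert (f2 : Tp = (1 - z * Y) * (1 - z * q * Y) * T / (1 - z * q * (Y * Y))).
  { rewrite <- e2. field. nzs. }
  assert (f3 : Tpp = (1 - z * (q * q) * Y) * (1 - z * (q * q) * q * Y) * Tp / (1 - z * (q * q) * q * (Y * Y))).
  { rewrite <- e3. field. nzs. }
  rewrite f3, f2, f1. unfold W1. field. nzs.
Qed.

Lemma alpha_mono (al t : R) : (0 <= al <= t)%R -> (t < 1)%R -> (al / (1 - al) <= t / (1 - t))%R.
Proof.
  intros H1 H2. unfold Rdiv. apply Rmult_le_compat. lra. left. apply Rinv_0_lt_compat. lra. lra.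
  apply Rinv_le_contravar; lra.
Qed.

Section FirstLA.
Variable q : C.
Hypothesis Hq : (Cmod q < 1)%R.
Let pi := Cmod q.

Definition kz (z : C) : R := (Cmod z / (1 - Cmod z))%R.

Lemma kz_nonneg z : (Cmod z < 1)%R -> (0 <= kz z)%R.
Proof. intros Hz. unfold kz. apply Rmult_le_pos. apply Cmod_ge_0. left. apply Rinv_0_lt_compat. lra. Qed.

Lemma V1_lower z m : (Cmod z < 1)%R -> (exp (- (kz z / (1 - pi))) <= Cmod (V1 q z m))%R.
Proof.
  intros Hz. unfold V1.
  assert (Ha : (Cmod (z * cpow q (S m)) <= Cmod z)%R) by (apply Cmod_zqk_le; exact Hq).
  eapply Rle_trans. 2: apply QF3. 2: exact Hq. 2: lra.
  apply exp_mono. apply Ropp_le_contravar. pose proof (Hpi q Hq). fold pi in H |- *.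
  pose proof (gs_bounds pi (S (S m)) H).
  assert (A := alpha_mono (Cmod (z * cpow q (S m))) (Cmod z) ltac:(split; [apply Cmod_ge_0| exact Ha]) Hz).
  assert (0 <= Cmod (z * cpow q (S m)) / (1 - Cmod (z * cpow q (S m))))%R.
  { apply Rmult_le_pos. apply Cmod_ge_0. left. apply Rinv_0_lt_compat. lra. }
  unfold kz. unfold Rdiv at 2. apply Rmult_le_compat; lra.
Qed.

Lemma B1_lower z m : (Cmod z < 1)%R -> (exp (- (kz z / (1 - pi ^ 2))) <= Cmod (B1 q z m))%R.
Proof.
  intros Hz. unfold B1.
  assert (Ha : (Cmod (z * cpow q (2 * S m + 2)) <= Cmod z)%R) by (apply Cmod_zqk_le; exact Hq).
  eapply Rle_trans. 2: apply QI3. 2: exact (Hqq q Hq). 2: lra.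
  rewrite Cmod_qq. fold pi.
  apply exp_mono. apply Ropp_le_contravar. pose proof (pi2 q Hq). fold pi in H.
  assert (A := alpha_mono (Cmod (z * cpow q (2 * S m + 2))) (Cmod z) ltac:(split; [apply Cmod_ge_0| exact Ha]) Hz).
  unfold kz. unfold Rdiv at 1 3. apply Rmult_le_compat_r. left. apply Rinv_0_lt_compat. lra. exact A.
Qed.

Lemma VB_ne0 z m : (Cmod z < 1)%R -> V1 q z m * B1 q z m <> 0.
Proof.
  intros Hz E. assert (H := f_equal Cmod E). rewrite Cmod_mult, Cmod_0 in H.
  pose proof (V1_lower z m Hz). pose proof (B1_lower z m Hz).
  assert (0 < exp (- (kz z / (1 - pi)))) by apply exp_pos.
  assert (0 < exp (- (kz z / (1 - pi ^ 2)))) by apply exp_pos.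
  assert (0 < Cmod (V1 q z m) * Cmod (B1 q z m))%R by (apply Rmult_lt_0_compat; lra). lra.
Qed.

Definition KVB z := (exp (kz z / (1 - pi)) * exp (kz z / (1 - pi ^ 2)))%R.

Lemma VB_inv z m : (Cmod z < 1)%R -> (Cmod (/ (V1 q z m * B1 q z m)) <= KVB z)%R.
Proof.
  intros Hz. rewrite Cmod_inv by (apply VB_ne0; exact Hz). rewrite Cmod_mult.
  pose proof (V1_lower z m Hz). pose proof (B1_lower z m Hz).
  assert (0 < exp (- (kz z / (1 - pi)))) by apply exp_pos.
  assert (0 < exp (- (kz z / (1 - pi ^ 2)))) by apply exp_pos.
  rewrite exp_Ropp in H, H0.
  assert (A1 : (/ Cmod (V1 q z m) <= exp (kz z / (1 - pi)))%R).
  { rewrite <- (Rinv_inv (exp (kz z / (1 - pi)))). apply Rinv_le_contravar.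
    apply Rinv_0_lt_compat. apply exp_pos. exact H. }
  assert (A2 : (/ Cmod (B1 q z m) <= exp (kz z / (1 - pi ^ 2)))%R).
  { rewrite <- (Rinv_inv (exp (kz z / (1 - pi ^ 2)))). apply Rinv_le_contravar.
    apply Rinv_0_lt_compat. apply exp_pos. exact H0. }
  assert (0 < / exp (kz z / (1 - pi)))%R by (apply Rinv_0_lt_compat; apply exp_pos).
  assert (0 < / exp (kz z / (1 - pi ^ 2)))%R by (apply Rinv_0_lt_compat; apply exp_pos).
  unfold KVB. rewrite Rinv_mult.
  apply Rmult_le_compat. left; apply Rinv_0_lt_compat; lra. left; apply Rinv_0_lt_compat; lra.
  exact A1. exact A2.
Qed.

Lemma KVB_pos z : (0 < KVB z)%R.
Proof. unfold KVB. apply Rmult_lt_0_compat; apply exp_pos. Qed.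

Lemma t1L_bound z m : (Cmod z < 1)%R -> (Cmod (t1L q z m) <= KVB z * pi ^ m)%R.
Proof.
  intros Hz. rewrite t1L_VB. unfold Cdiv. rewrite Cmod_mult, Cmod_cpow. fold pi.
  pose proof (VB_inv z m Hz). pose proof (Hpi q Hq). fold pi in H0.
  assert (pi ^ S m <= pi ^ m)%R by (apply pow_decr; [lra| lia]).
  assert (0 <= pi ^ S m)%R by (apply pow_le; lra).
  pose proof (Cmod_ge_0 (/ (V1 q z m * B1 q z m))). pose proof (KVB_pos z).
  rewrite Rmult_comm. apply Rmult_le_compat; lra.
Qed.

Definition FL1 z := SeriesC (t1L q z).

Lemma FL1_conv z : (Cmod z < 1)%R -> is_series (t1L q z) (FL1 z).
Proof. intros Hz. apply (series_exists _ (KVB z) pi (Hpi q Hq)). intros n. apply t1L_bound. exact Hz. Qed.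

Lemma KVB_half w : (Cmod w <= 1/2)%R -> (KVB w <= E1 q * E2 q)%R.
Proof.
  intros Hw. unfold KVB, E1, E2. fold pi.
  assert (kz w <= 1)%R.
  { unfold kz. pose proof (Cmod_ge_0 w). apply Rmult_le_reg_r with (1 - Cmod w)%R. lra.
    unfold Rdiv. rewrite Rmult_assoc, Rinv_l by lra. lra. }
  pose proof (Hpi q Hq). pose proof (pi2 q Hq). fold pi in H0, H1. pose proof (kz_nonneg w ltac:(lra)).
  apply Rmult_le_compat. left; apply exp_pos. left; apply exp_pos.
  apply exp_mono. unfold Rdiv. apply Rmult_le_compat_r. left; apply Rinv_0_lt_compat; lra. lra.
  apply exp_mono. unfold Rdiv. apply Rmult_le_compat_r. left; apply Rinv_0_lt_compat; lra. lra.
Qed.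

Lemma t1L_lip w m : (Cmod w <= 1/2)%R ->
  (Cmod (t1L q w m - cpow q (S m)) <= Cmod w * (KL q * (E1 q * E2 q)) * pi ^ m)%R.
Proof.
  intros Hw. rewrite t1L_VB.
  assert (Hne := VB_ne0 w m ltac:(lra)).
  replace (cpow q (S m) / (V1 q w m * B1 q w m) - cpow q (S m)) with
    (- (cpow q (S m) * (V1 q w m * B1 q w m - 1) * / (V1 q w m * B1 q w m))) by (field; split; intro E; apply Hne; rewrite E; ring).
  rewrite Cmod_opp, !Cmod_mult, Cmod_cpow. fold pi.
  assert (H1 : (Cmod (V1 q w m * B1 q w m - 1) <= Cmod w * KL q)%R).
  { unfold V1, B1. apply AB_lip. exact Hq. apply Cmod_zqk_le; exact Hq. apply Cmod_zqk_le; exact Hq. lra. }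
  assert (H2 := VB_inv w m ltac:(lra)). assert (H3 := KVB_half w Hw).
  pose proof (Hpi q Hq). fold pi in H.
  assert (pi ^ S m <= pi ^ m)%R by (apply pow_decr; [lra| lia]).
  assert (0 <= pi ^ S m)%R by (apply pow_le; lra).
  pose proof (Cmod_ge_0 (V1 q w m * B1 q w m - 1)). pose proof (Cmod_ge_0 (/ (V1 q w m * B1 q w m))).
  assert (0 <= Cmod w * KL q)%R by nra.
  assert (Cmod (V1 q w m * B1 q w m - 1) * Cmod (/ (V1 q w m * B1 q w m)) <= Cmod w * KL q * (E1 q * E2 q))%R.
  { apply Rmult_le_compat; lra. }
  assert (0 <= Cmod (V1 q w m * B1 q w m - 1) * Cmod (/ (V1 q w m * B1 q w m)))%R by nra.
  replace (Cmod w * (KL q * (E1 q * E2 q)) * pi ^ m)%R with (pi ^ m * (Cmod w * KL q * (E1 q * E2 q)))%R by ring.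
  rewrite Rmult_assoc. apply Rmult_le_compat; lra.
Qed.

Lemma geom1_series : is_series (fun m => cpow q (S m)) (q / (1 - q)).
Proof.
  assert (Hq1 : 1 - q <> 0) by (apply ne0_minus; exact Hq).
  replace (q / (1 - q)) with (cpow q 1 / (1 - q)) by (simpl; field; exact Hq1).
  apply (tele _ (fun n => cpow q (S n) / (1 - q)) (Cmod (q / (1 - q))) (Cmod q)).
  split. apply Cmod_ge_0. exact Hq.
  intros n. change (cpow q (S (S n))) with (q * cpow q (S n)). field. exact Hq1.
  intros n. unfold Cdiv. rewrite !Cmod_mult, Cmod_cpow. simpl. right. ring.
Qed.

Lemma FL1_lip : exists d K, (0 < d)%R /\ forall w, (Cmod w < d)%R -> (Cmod (FL1 w - q / (1 - q)) <= K * Cmod w)%R.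
Proof.
  exists (1/2)%R, (KL q * (E1 q * E2 q) / (1 - pi))%R. split. lra. intros w Hw.
  assert (H := lip_series (t1L q w) (fun m => cpow q (S m)) (FL1 w) (q / (1 - q)) (Cmod w * (KL q * (E1 q * E2 q))) pi (Hpi q Hq)
     (FL1_conv w ltac:(lra)) geom1_series).
  replace (KL q * (E1 q * E2 q) / (1 - pi) * Cmod w)%R with (Cmod w * (KL q * (E1 q * E2 q)) / (1 - pi))%R by (unfold Rdiv; ring).
  apply H. intros n. apply t1L_lip. lra.
Qed.

End FirstLA.

Section FirstLB.
Variable q : C.
Hypothesis Hq : (Cmod q < 1)%R.
Let pi := Cmod q.

Lemma Cmod_small z k : (Cmod z < 1)%R -> (Cmod (z * cpow q k) < 1)%R.
Proof. intros Hz. eapply Rle_lt_trans. apply Cmod_zqk_le. exact Hq. exact Hz. Qed.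

Lemma Cmod_small2 z k n : (Cmod z < 1)%R -> (Cmod (z * cpow q k * (cpow q n * cpow q n)) < 1)%R.
Proof.
  intros Hz. replace (z * cpow q k * (cpow q n * cpow q n)) with (z * cpow q (k + n + n)) by (rewrite !cpow_add; ring).
  apply Cmod_small. exact Hz.
Qed.

Lemma t1L_r1 z m : (Cmod z < 1)%R ->
  t1L q z (S m) * (1 - z * q * (cpow q (S m) * cpow q (S m))) = q * (1 - z * cpow q (S m)) * t1L q z m.
Proof.
  intros Hz. rewrite !t1L_VB.
  assert (K := VB_K1 q Hq z m).
  assert (h1 := VB_ne0 q Hq z m Hz). assert (h2 := VB_ne0 q Hq z (S m) Hz).
  assert (h3 : 1 - z * cpow q (S m) <> 0) by (apply ne0_minus; apply Cmod_small; exact Hz).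
  set (Y := cpow q (S m)) in *.
  set (P := V1 q z m * B1 q z m) in *. set (P' := V1 q z (S m) * B1 q z (S m)) in *.
  assert (Hs : 1 - z * q * (Y * Y) = (1 - z * Y) * P' / P).
  { rewrite K. field. exact h1. }
  rewrite Hs. change (cpow q (S (S m))) with (q * Y). field. split; assumption.
Qed.

Lemma t1L_r2 z m : (Cmod z < 1)%R -> (Cmod (z * (q * q)) < 1)%R ->
  t1L q (z * (q * q)) m * (1 - z * q * (cpow q (S m) * cpow q (S m))) =
  (1 - z * cpow q (S m)) * (1 - z * q * cpow q (S m)) * t1L q z m.
Proof.
  intros Hz Hzp. rewrite !t1L_VB.
  assert (K := VB_K2 q Hq z m).
  assert (h1 := VB_ne0 q Hq z m Hz). assert (h2 := VB_ne0 q Hq (z * (q * q)) m Hzp).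
  set (Y := cpow q (S m)) in *.
  set (P := V1 q z m * B1 q z m) in *. set (P' := V1 q (z * (q * q)) m * B1 q (z * (q * q)) m) in *.
  assert (Hs : 1 - z * q * (Y * Y) = (1 - z * Y) * (1 - z * q * Y) * P' / P).
  { rewrite K. field. exact h1. }
  rewrite Hs. field. split; assumption.
Qed.

Lemma W1_bound z Y : (Cmod z < 1)%R -> (Cmod Y <= 1)%R -> (Cmod (1 - z * q * (Y * Y)) >= 1 - Cmod z)%R ->
  (Cmod (W1 q z Y) <= 8 / (1 - Cmod z))%R.
Proof.
  intros Hz HY HD. unfold W1, Cdiv.
  assert (HD0 : 1 - z * q * (Y * Y) <> 0).
  { intro E. rewrite E, Cmod_0 in HD. lra. }
  rewrite !Cmod_mult, Cmod_inv by exact HD0.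
  assert (N1 : (Cmod (Y - q) <= 2)%R).
  { unfold Cminus. eapply Rle_trans. apply Cmod_triangle. rewrite Cmod_opp. lra. }
  assert (N2 : (Cmod (1 + q - q * (1 + z) * Y) <= 4)%R).
  { unfold Cminus. eapply Rle_trans. apply Cmod_triangle. rewrite Cmod_opp.
    eapply Rle_trans. apply Rplus_le_compat. apply Cmod_triangle. apply Rle_refl.
    rewrite Cmod_1, !Cmod_mult.
    assert (Cmod (1 + z) <= 2)%R by (eapply Rle_trans; [apply Cmod_triangle| rewrite Cmod_1; lra]).
    pose proof (Cmod_ge_0 q). pose proof (Cmod_ge_0 Y). pose proof (Cmod_ge_0 (1 + z)).
    assert (Cmod q * Cmod (1 + z) <= 2)%R by nra.
    assert (0 <= Cmod q * Cmod (1 + z))%R by nra. nra. }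
  pose proof (Cmod_ge_0 z). pose proof (Cmod_ge_0 (Y - q)). pose proof (Cmod_ge_0 (1 + q - q * (1 + z) * Y)).
  assert (Cmod z * Cmod (Y - q) * Cmod (1 + q - q * (1 + z) * Y) <= 8)%R.
  { assert (Cmod z * Cmod (Y - q) <= 2)%R by nra.
    assert (0 <= Cmod z * Cmod (Y - q))%R by nra. nra. }
  assert (0 <= Cmod z * Cmod (Y - q) * Cmod (1 + q - q * (1 + z) * Y))%R by (repeat apply Rmult_le_pos; lra).
  unfold Rdiv. apply Rmult_le_compat; try lra. left. apply Rinv_0_lt_compat. lra.
  apply Rinv_le_contravar; lra.
Qed.

Lemma FL1_eq2 z : (Cmod z < 1)%R ->
  (1 - z * q) * FL1 q z - (1 + q - z * q * q * q) * FL1 q (z * (q * q)) + q * FL1 q (z * (q * q) * (q * q)) = 0.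
Proof.
  intros Hz.
  assert (Hzp : (Cmod (z * (q * q)) < 1)%R).
  { rewrite Cmod_mult, Cmod_qq. pose proof (Hpi q Hq). pose proof (Cmod_ge_0 z). nra. }
  assert (Hzpp : (Cmod (z * (q * q) * (q * q)) < 1)%R).
  { rewrite Cmod_mult, Cmod_qq. pose proof (Hpi q Hq). pose proof (Cmod_ge_0 (z * (q * q))). nra. }
  assert (S0' := is_series_scal (K := C_AbsRing) (V := C_NormedModule) (1 - z * q) _ _ (FL1_conv q Hq z Hz)).
  assert (S0 : is_series (fun n => (1 - z * q) * t1L q z n) ((1 - z * q) * FL1 q z)) by exact S0'.
  assert (S1 := series_lin _ _ _ _ (- (1 + q - z * q * q * q)) S0 (FL1_conv q Hq _ Hzp)).
  assert (S2 := series_lin _ _ _ _ q S1 (FL1_conv q Hq _ Hzpp)).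
  assert (S3 : is_series (fun n => (1 - z * q) * t1L q z n + - (1 + q - z * q * q * q) * t1L q (z * (q * q)) n +
                   q * t1L q (z * (q * q) * (q * q)) n)
              (W1 q z (cpow q 1) * t1L q z 0)).
  { apply (tele _ (fun n => W1 q z (cpow q (S n)) * t1L q z n) (8 / (1 - Cmod z) * KVB q z) pi (Hpi q Hq)).
    - intros n.
      assert (h1 : 1 - z * q * (cpow q (S n) * cpow q (S n)) <> 0).
      { apply ne0_minus. apply (Cmod_small2 z 1 (S n)) in Hz. simpl cpow at 1 in Hz.
        replace (z * q * (cpow q (S n) * cpow q (S n))) with (z * (q * 1) * (cpow q (S n) * cpow q (S n))) by ring. exact Hz. }
      assert (h2 : 1 - z * q * q * q * (cpow q (S n) * cpow q (S n)) <> 0).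
      { apply ne0_minus. apply (Cmod_small2 z 3 (S n)) in Hz. simpl cpow at 1 in Hz.
        replace (z * q * q * q * (cpow q (S n) * cpow q (S n))) with (z * (q * (q * (q * 1))) * (cpow q (S n) * cpow q (S n))) by ring. exact Hz. }
      assert (E := cert1_alg q z (cpow q (S n)) (t1L q z n) (t1L q z (S n)) (t1L q (z * (q * q)) n)
                      (t1L q (z * (q * q) * (q * q)) n) h1 h2 (t1L_r1 z n Hz) (t1L_r2 z n Hz Hzp) (t1L_r2 (z * (q * q)) n Hzp Hzpp)).
      change (cpow q (S (S n))) with (q * cpow q (S n)).
      transitivity ((1 - z * q) * t1L q z n - (1 + q - z * q * q * q) * t1L q (z * (q * q)) n + q * t1L q (z * (q * q) * (q * q)) n).
      ring. exact E.
    - intros n. rewrite Cmod_mult.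
      assert (HY : (Cmod (cpow q (S n)) <= 1)%R) by (apply Cmod_cpow_le1; lra).
      assert (HD : (Cmod (1 - z * q * (cpow q (S n) * cpow q (S n))) >= 1 - Cmod z)%R).
      { apply Rle_ge. eapply Rle_trans. 2: apply Cmod_1m_ge.
        assert (Hs := Cmod_zX_le z q (1 + S n + S n) ltac:(lra)). rewrite !cpow_add in Hs.
        replace (z * q * (cpow q (S n) * cpow q (S n))) with (z * (cpow q 1 * cpow q (S n) * cpow q (S n))) by (simpl; ring).
        lra. }
      assert (H1 := W1_bound z (cpow q (S n)) Hz HY HD).
      assert (H2 := t1L_bound q Hq z n Hz). fold pi in H2.
      pose proof (Cmod_ge_0 (W1 q z (cpow q (S n)))). pose proof (Cmod_ge_0 (t1L q z n)).
      assert (0 <= 8 / (1 - Cmod z))%R by (apply Rmult_le_pos; [lra| left; apply Rinv_0_lt_compat; lra]).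
      replace (8 / (1 - Cmod z) * KVB q z * pi ^ n)%R with ((8 / (1 - Cmod z)) * (KVB q z * pi ^ n))%R by ring.
      apply Rmult_le_compat; lra. }
  assert (E0 : W1 q z (cpow q 1) * t1L q z 0 = 0).
  { unfold W1. change (cpow q 1) with (q * 1). unfold Cdiv. ring. }
  rewrite E0 in S3.
  assert (U := is_seriesC_unique _ _ _ S2 S3).
  transitivity ((1 - z * q) * FL1 q z + - (1 + q - z * q * q * q) * FL1 q (z * (q * q)) + q * FL1 q (z * (q * q) * (q * q))).
  ring. exact U.
Qed.

End FirstLB.

Definition t1R (q z : C) (n : nat) : C :=
  Cdiv (Cmult (cpow z n) (cpow q (2 * n * n + 2 * n + 1)))
       (Cmult (qpoch q (Cmult q q) (S n)) (qpoch (Cmult z q) (Cmult q q) (S n))).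

Section FirstR.
Variable q : C.
Hypothesis Hq : (Cmod q < 1)%R.
Let pi := Cmod q.

Lemma Pz_lower z k : (Cmod z < 1)%R -> (exp (- (kz z / (1 - pi ^ 2))) <= Cmod (qpoch (z * q) (q * q) k))%R.
Proof.
  intros Hz.
  assert (Ha : (Cmod (z * q) <= Cmod z)%R).
  { replace (z * q) with (z * cpow q 1) by (simpl; ring). apply Cmod_zqk_le. exact Hq. }
  eapply Rle_trans. 2: apply QF3. 2: exact (Hqq q Hq). 2: lra.
  apply exp_mono. apply Ropp_le_contravar. rewrite Cmod_qq. fold pi.
  pose proof (pi2 q Hq). fold pi in H.
  pose proof (gs_bounds (pi ^ 2) k H).
  assert (A := alpha_mono (Cmod (z * q)) (Cmod z) ltac:(split; [apply Cmod_ge_0| exact Ha]) Hz).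
  assert (0 <= Cmod (z * q) / (1 - Cmod (z * q)))%R.
  { apply Rmult_le_pos. apply Cmod_ge_0. left. apply Rinv_0_lt_compat. lra. }
  unfold kz. unfold Rdiv at 2. apply Rmult_le_compat; lra.
Qed.

Lemma Pz_ne0 z k : (Cmod z < 1)%R -> qpoch (z * q) (q * q) k <> 0.
Proof.
  intros Hz E. pose proof (Pz_lower z k Hz). rewrite E, Cmod_0 in H.
  assert (0 < exp (- (kz z / (1 - pi ^ 2))))%R by apply exp_pos. lra.
Qed.

Definition Kzr z := (KR q * exp (kz z / (1 - pi ^ 2)))%R.

Lemma Kzr_pos z : (0 < Kzr z)%R.
Proof. unfold Kzr. apply Rmult_lt_0_compat. apply KR_pos. apply exp_pos. Qed.

Lemma Pz_inv z k : (Cmod z < 1)%R -> (Cmod (/ qpoch (z * q) (q * q) k) <= exp (kz z / (1 - pi ^ 2)))%R.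
Proof.
  intros Hz. rewrite Cmod_inv by (apply Pz_ne0; exact Hz).
  pose proof (Pz_lower z k Hz). rewrite exp_Ropp in H.
  rewrite <- (Rinv_inv (exp (kz z / (1 - pi ^ 2)))). apply Rinv_le_contravar.
  apply Rinv_0_lt_compat. apply exp_pos. exact H.
Qed.

Lemma t1R_bound_gen z n : (Cmod z < 1)%R -> (Cmod (t1R q z n) <= Cmod z ^ n * pi ^ n * Kzr z)%R.
Proof.
  intros Hz. unfold t1R, Cdiv.
  assert (Eq : / (qpoch q (q * q) (S n) * qpoch (z * q) (q * q) (S n)) = / qpoch q (q * q) (S n) * / qpoch (z * q) (q * q) (S n)).
  { field. split. apply Pz_ne0; exact Hz. apply qpochq_ne0; exact Hq. }
  rewrite Eq. rewrite !Cmod_mult, !Cmod_cpow. fold pi.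
  pose proof (Hpi q Hq). fold pi in H.
  assert (pi ^ (2 * n * n + 2 * n + 1) <= pi ^ n)%R by (apply pow_decr; [lra| lia]).
  assert (0 <= pi ^ (2 * n * n + 2 * n + 1))%R by (apply pow_le; lra).
  assert (0 <= Cmod z ^ n)%R by (apply pow_le; apply Cmod_ge_0).
  assert (H3 := inv_qpochq q Hq (S n)). assert (H4 := Pz_inv z (S n) Hz).
  pose proof (Cmod_ge_0 (/ qpoch q (q * q) (S n))). pose proof (Cmod_ge_0 (/ qpoch (z * q) (q * q) (S n))).
  unfold Kzr.
  replace (Cmod z ^ n * pi ^ (2 * n * n + 2 * n + 1) * (Cmod (/ qpoch q (q * q) (S n)) * Cmod (/ qpoch (z * q) (q * q) (S n))))%R
    with ((Cmod z ^ n * pi ^ (2 * n * n + 2 * n + 1)) * (Cmod (/ qpoch q (q * q) (S n)) * Cmod (/ qpoch (z * q) (q * q) (S n))))%R by ring.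
  replace (Cmod z ^ n * pi ^ n * (KR q * exp (kz z / (1 - pi ^ 2))))%R
    with ((Cmod z ^ n * pi ^ n) * (KR q * exp (kz z / (1 - pi ^ 2))))%R by ring.
  apply Rmult_le_compat. apply Rmult_le_pos; lra. apply Rmult_le_pos; lra.
  apply Rmult_le_compat_l; lra. apply Rmult_le_compat; lra.
Qed.

Lemma t1R_bound z n : (Cmod z < 1)%R -> (Cmod (t1R q z n) <= Kzr z * pi ^ n)%R.
Proof.
  intros Hz. eapply Rle_trans. apply t1R_bound_gen. exact Hz.
  assert (Cmod z ^ n <= 1)%R by (apply pow_le1; split; [apply Cmod_ge_0| lra]).
  assert (0 <= pi ^ n)%R by (apply pow_le; apply (Hpi q Hq)).
  assert (0 <= Cmod z ^ n)%R by (apply pow_le; apply Cmod_ge_0).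
  pose proof (Kzr_pos z).
  assert (Cmod z ^ n * pi ^ n <= pi ^ n)%R by (rewrite <- (Rmult_1_l (pi ^ n)) at 2; apply Rmult_le_compat_r; lra).
  rewrite (Rmult_comm (Kzr z)). apply Rmult_le_compat_r; lra.
Qed.

Definition FR1 z := SeriesC (t1R q z).

Lemma FR1_conv z : (Cmod z < 1)%R -> is_series (t1R q z) (FR1 z).
Proof. intros Hz. apply (series_exists _ (Kzr z) pi (Hpi q Hq)). intros n. apply t1R_bound. exact Hz. Qed.

Lemma t1R0 z : t1R q z 0 = q / ((1 - q) * (1 - z * q)).
Proof.
  unfold t1R. change (cpow z 0) with (RtoC 1). change (cpow q (2 * 0 * 0 + 2 * 0 + 1)) with (q * RtoC 1).
  change (qpoch q (q * q) 1) with (RtoC 1 * (1 - q * RtoC 1)).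
  change (qpoch (z * q) (q * q) 1) with (RtoC 1 * (1 - z * q * RtoC 1)).
  unfold Cdiv. f_equal. ring. f_equal. ring.
Qed.

Definition KL1 := (2 * Cmod (q / (1 - q)) + KR q * E2 q)%R.

Lemma t1R_lip w n : (Cmod w <= 1/2)%R -> (Cmod (t1R q w n - lamR (q / (1 - q)) n) <= Cmod w * KL1 * pi ^ n)%R.
Proof.
  intros Hw.
  assert (HKR := KR_pos q). assert (HE2 : (0 < E2 q)%R) by apply exp_pos.
  pose proof (Cmod_ge_0 (q / (1 - q))). pose proof (Cmod_ge_0 w).
  destruct n as [|m].
  - simpl lamR. rewrite t1R0.
    assert (h1 : 1 - q <> 0) by (apply ne0_minus; exact Hq).
    assert (Hwq : (Cmod (w * q) <= 1/2)%R).
    { rewrite Cmod_mult. pose proof (Hpi q Hq). fold pi in H1 |- *. nra. }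
    assert (h2 : 1 - w * q <> 0) by (apply ne0_minus; lra).
    replace (q / ((1 - q) * (1 - w * q)) - q / (1 - q)) with ((q / (1 - q)) * (w * q) * / (1 - w * q)) by (field; split; assumption).
    rewrite !Cmod_mult.
    assert (I := inv_bound_minus (w * q) (1/2) Hwq ltac:(lra)).
    replace (/ (1 - 1 / 2))%R with 2%R in I by field.
    assert (Cmod q <= 1)%R by lra.
    simpl. unfold KL1.
    assert (Cmod w * Cmod q <= Cmod w)%R by nra.
    assert (Cmod (q / (1 - q)) * (Cmod w * Cmod q) <= Cmod (q / (1 - q)) * Cmod w)%R by (apply Rmult_le_compat_l; lra).
    pose proof (Cmod_ge_0 (/ (1 - w * q))).
    assert (Cmod (q / (1 - q)) * (Cmod w * Cmod q) * Cmod (/ (1 - w * q)) <= Cmod (q / (1 - q)) * Cmod w * 2)%R.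
    { pose proof (Cmod_ge_0 q). apply Rmult_le_compat; try lra. apply Rmult_le_pos; [lra| apply Rmult_le_pos; lra]. }
    assert (0 <= Cmod w * (KR q * E2 q))%R by (apply Rmult_le_pos; nra).
    nra.
  - simpl lamR. replace (t1R q w (S m) - 0) with (t1R q w (S m)) by ring.
    eapply Rle_trans. apply t1R_bound_gen. lra.
    assert (HK : (Kzr w <= KR q * E2 q)%R).
    { unfold Kzr, E2. fold pi. apply Rmult_le_compat_l. lra. apply exp_mono.
      assert (kz w <= 1)%R.
      { unfold kz. apply Rmult_le_reg_r with (1 - Cmod w)%R. lra.
        unfold Rdiv. rewrite Rmult_assoc, Rinv_l by lra. lra. }
      pose proof (pi2 q Hq). fold pi in H2. unfold Rdiv. apply Rmult_le_compat_r. left; apply Rinv_0_lt_compat; lra. lra. }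
    simpl. assert (Cmod w ^ m <= 1)%R by (apply pow_le1; split; [apply Cmod_ge_0| lra]).
    assert (0 <= Cmod w ^ m)%R by (apply pow_le; apply Cmod_ge_0).
    assert (0 <= pi * pi ^ m)%R by (apply Rmult_le_pos; [apply Cmod_ge_0| apply pow_le; apply Cmod_ge_0]).
    pose proof (Kzr_pos w).
    assert (Cmod w * Cmod w ^ m <= Cmod w)%R by nra.
    assert (KR q * E2 q <= KL1)%R by (unfold KL1; lra).
    replace (Cmod w * KL1 * (pi * pi ^ m))%R with ((Cmod w * (pi * pi ^ m)) * KL1)%R by ring.
    replace (Cmod w * Cmod w ^ m * (pi * pi ^ m) * Kzr w)%R with ((Cmod w * Cmod w ^ m * (pi * pi ^ m)) * Kzr w)%R by ring.
    apply Rmult_le_compat; try lra. apply Rmult_le_pos; [apply Rmult_le_pos|]; lra.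
    apply Rmult_le_compat_r; lra.
Qed.

Lemma FR1_lip : exists d K, (0 < d)%R /\ forall w, (Cmod w < d)%R -> (Cmod (FR1 w - q / (1 - q)) <= K * Cmod w)%R.
Proof.
  exists (1/2)%R, (KL1 / (1 - pi))%R. split. lra. intros w Hw.
  assert (H := lip_series (t1R q w) (lamR (q / (1 - q))) (FR1 w) (q / (1 - q)) (Cmod w * KL1) pi (Hpi q Hq)
     (FR1_conv w ltac:(lra)) (lamR_series q Hq _)).
  replace (KL1 / (1 - pi) * Cmod w)%R with (Cmod w * KL1 / (1 - pi))%R by (unfold Rdiv; ring).
  apply H. intros n. apply t1R_lip. lra.
Qed.

End FirstR.

Section FirstR2.
Variable q : C.
Hypothesis Hq : (Cmod q < 1)%R.
Let pi := Cmod q.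

Lemma Cmod_zq_small z : (Cmod z < 1)%R -> forall k, (Cmod (z * cpow q k) < 1)%R.
Proof. intros Hz k. eapply Rle_lt_trans. apply Cmod_zqk_le. exact Hq. exact Hz. Qed.

Lemma cpow_lt1 k : (Cmod (cpow q (S k)) < 1)%R.
Proof.
  rewrite Cmod_cpow. pose proof (Hpi q Hq). simpl.
  assert (0 <= Cmod q ^ k <= 1)%R by (split; [apply pow_le; lra | apply pow_le1; lra]). nra.
Qed.

Lemma t1R_ra z n : (Cmod z < 1)%R ->
  t1R q (z * (q * q)) n * (1 - z * q * q * q * (cpow q n * cpow q n)) = (1 - z * q) * (cpow q n * cpow q n) * t1R q z n.
Proof.
  intros Hz.
  assert (Hzp : (Cmod (z * (q * q)) < 1)%R).
  { rewrite Cmod_mult, Cmod_qq. pose proof (Hpi q Hq). pose proof (Cmod_ge_0 z). nra. }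
  unfold t1R. rewrite !cpow_mul.
  set (X := cpow q n).
  assert (HP := qpoch_head (z * q) (q * q) (S n)).
  rewrite qpoch_S in HP. rewrite cpow_mul in HP. change (cpow q (S n)) with (q * X) in HP.
  replace (z * q * (q * q)) with (z * (q * q) * q) in HP by ring.
  set (P := qpoch (z * q) (q * q) (S n)) in *. set (Pp := qpoch (z * (q * q) * q) (q * q) (S n)) in *.
  set (Q := qpoch q (q * q) (S n)).
  assert (hP : P <> 0) by (apply Pz_ne0; assumption).
  assert (hPp : Pp <> 0) by (apply Pz_ne0; assumption).
  assert (hQ : Q <> 0) by (apply qpochq_ne0; assumption).
  assert (h1 : 1 - z * q <> 0).
  { apply ne0_minus. replace (z * q) with (z * cpow q 1) by (simpl; ring). apply Cmod_zq_small. exact Hz. }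
  assert (Hs : 1 - z * q * q * q * (X * X) = (1 - z * q) * Pp / P).
  { apply (f_equal (fun t => t / P)) in HP. rewrite <- HP. field. exact hP. }
  rewrite Hs. field. repeat split; assumption.
Qed.

Lemma t1R_rb z n : (Cmod z < 1)%R ->
  t1R q z (S n) * ((1 - q * q * q * (cpow q n * cpow q n)) * (1 - z * q * q * q * (cpow q n * cpow q n))) =
  z * (q * q * q * q) * (cpow q n * cpow q n * (cpow q n * cpow q n)) * t1R q z n.
Proof.
  intros Hz. unfold t1R.
  replace (2 * S n * S n + 2 * S n + 1)%nat with ((2 * n * n + 2 * n + 1) + (n + n + n + n + 4))%nat by ring.
  rewrite cpow_add, !cpow_add.
  rewrite (qpoch_S q (q * q) (S n)), (qpoch_S (z * q) (q * q) (S n)).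
  change (cpow z (S n)) with (z * cpow z n).
  change (cpow (q * q) (S n)) with (q * q * cpow (q * q) n).
  rewrite cpow_mul.
  set (X := cpow q n).
  set (P := qpoch (z * q) (q * q) (S n)). set (Q := qpoch q (q * q) (S n)).
  assert (hP : P <> 0) by (apply Pz_ne0; assumption).
  assert (hQ : Q <> 0) by (apply qpochq_ne0; assumption).
  assert (Hs : forall k, (Cmod (z * cpow q k * (X * X)) < 1)%R).
  { intros k. replace (z * cpow q k * (X * X)) with (z * cpow q (k + n + n)) by (unfold X; rewrite !cpow_add; ring).
    apply Cmod_zq_small. exact Hz. }
  assert (h1 : 1 - q * (q * q * (X * X)) <> 0).
  { apply ne0_minus. replace (q * (q * q * (X * X))) with (cpow q (3 + n + n)) by (unfold X; rewrite !cpow_add; simpl; ring).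
    exact (cpow_lt1 (2 + n + n)). }
  assert (h2 : 1 - z * q * (q * q * (X * X)) <> 0).
  { apply ne0_minus. replace (z * q * (q * q * (X * X))) with (z * cpow q 3 * (X * X)) by (simpl; ring). apply Hs. }
  change (cpow q 4) with (q * (q * (q * (q * RtoC 1)))).
  field. nzs.
Qed.

Lemma FR1_eq1 z : (Cmod z < 1)%R -> (1 - z * q) * FR1 q z - q * FR1 q (z * (q * q)) = q.
Proof.
  intros Hz.
  assert (Hzp : (Cmod (z * (q * q)) < 1)%R).
  { rewrite Cmod_mult, Cmod_qq. pose proof (Hpi q Hq). pose proof (Cmod_ge_0 z). nra. }
  assert (S0' := is_series_scal (K := C_AbsRing) (V := C_NormedModule) (1 - z * q) _ _ (FR1_conv q Hq z Hz)).
  assert (S0 : is_series (fun n => (1 - z * q) * t1R q z n) ((1 - z * q) * FR1 q z)) by exact S0'.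
  assert (S1 := series_lin _ _ _ _ (- q) S0 (FR1_conv q Hq _ Hzp)).
  assert (S2 : is_series (fun n => (1 - z * q) * t1R q z n + - q * t1R q (z * (q * q)) n)
     ((1 - z * q) * (1 - q * (cpow q 0 * cpow q 0)) * t1R q z 0)).
  { apply (tele _ (fun n => (1 - z * q) * (1 - q * (cpow q n * cpow q n)) * t1R q z n) (4 * Kzr q z) pi (Hpi q Hq)).
    - intros n.
      assert (ra := t1R_ra z n Hz). assert (rb := t1R_rb z n Hz).
      set (X := cpow q n) in *.
      assert (Hs : forall k, (Cmod (z * cpow q k * (X * X)) < 1)%R).
      { intros k. replace (z * cpow q k * (X * X)) with (z * cpow q (k + n + n)) by (unfold X; rewrite !cpow_add; ring).
        apply Cmod_zq_small. exact Hz. }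
      assert (h1 : 1 - q * q * q * (X * X) <> 0).
      { apply ne0_minus. replace (q * q * q * (X * X)) with (cpow q (3 + n + n)) by (unfold X; rewrite !cpow_add; simpl; ring).
        exact (cpow_lt1 (2 + n + n)). }
      assert (h2 : 1 - z * q * q * q * (X * X) <> 0).
      { apply ne0_minus. replace (z * q * q * q * (X * X)) with (z * cpow q 3 * (X * X)) by (simpl; ring). apply Hs. }
      assert (f1 : t1R q (z * (q * q)) n = (1 - z * q) * (X * X) * t1R q z n / (1 - z * q * q * q * (X * X))).
      { rewrite <- ra. field. exact h2. }
      assert (f2 : t1R q z (S n) = z * (q * q * q * q) * (X * X * (X * X)) * t1R q z n /
                      ((1 - q * q * q * (X * X)) * (1 - z * q * q * q * (X * X)))).
      { rewrite <- rb. field. split; assumption. }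
      change (cpow q (S n)) with (q * X).
      rewrite f1, f2. field. split; nzs.
    - intros n. rewrite !Cmod_mult.
      assert (H1 : (Cmod (1 - z * q) <= 2)%R).
      { eapply Rle_trans. apply Cmod_1m_le. rewrite Cmod_mult. pose proof (Cmod_ge_0 z). pose proof (Cmod_ge_0 q). nra. }
      assert (H2 : (Cmod (1 - q * (cpow q n * cpow q n)) <= 2)%R).
      { eapply Rle_trans. apply Cmod_1m_le. rewrite !Cmod_mult, Cmod_cpow. fold pi. pose proof (Hpi q Hq). fold pi in H.
        assert (0 <= pi ^ n <= 1)%R by (split; [apply pow_le; lra | apply pow_le1; lra]).
        assert (0 <= pi ^ n * pi ^ n <= 1)%R by (split; nra). nra. }
      assert (H3 := t1R_bound q Hq z n Hz). fold pi in H3.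
      pose proof (Cmod_ge_0 (1 - z * q)). pose proof (Cmod_ge_0 (1 - q * (cpow q n * cpow q n))).
      pose proof (Cmod_ge_0 (t1R q z n)).
      replace (4 * Kzr q z * pi ^ n)%R with ((2 * 2) * (Kzr q z * pi ^ n))%R by ring.
      apply Rmult_le_compat; try lra. apply Rmult_le_pos; lra. apply Rmult_le_compat; lra. }
  assert (E0 : (1 - z * q) * (1 - q * (cpow q 0 * cpow q 0)) * t1R q z 0 = q).
  { rewrite t1R0. change (cpow q 0) with (RtoC 1). field. split.
    apply ne0_minus. replace (z * q) with (z * cpow q 1) by (simpl; ring). apply Cmod_zq_small. exact Hz.
    apply ne0_minus. exact Hq. }
  rewrite E0 in S2.
  assert (U := is_seriesC_unique _ _ _ S1 S2).
  transitivity ((1 - z * q) * FR1 q z + - q * FR1 q (z * (q * q))). ring. exact U.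
Qed.

End FirstR2.

Lemma first_identity (q z : C) : (Cmod q < 1)%R -> (Cmod z < 1)%R ->
  exists T, is_series (t1L q z) T /\ is_series (t1R q z) T.
Proof.
  intros Hq Hz.
  exists (FL1 q z). split. apply FL1_conv; assumption.
  assert (E : FL1 q z = FR1 q z).
  { apply (uniq_core (q * q) 1 (FL1 q) (FR1 q) 1 (- q) q 0 q (q / (1 - q))).
    - exact (Hqq q Hq).
    - lra.
    - intros w Hw. apply Cminus_eq0.
      transitivity ((1 - w * q) * FL1 q w - (1 + q - w * q * q * q) * FL1 q (w * (q * q)) + q * FL1 q (w * (q * q) * (q * q))).
      ring. apply FL1_eq2; assumption.
    - intros w Hw. transitivity ((1 - w * q) * FR1 q w - q * FR1 q (w * (q * q))). ring. apply FR1_eq1; assumption.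
    - field. apply ne0_minus. exact Hq.
    - apply FL1_lip. exact Hq.
    - apply FR1_lip. exact Hq.
    - intros w Hw. replace (1 + - q * w) with (1 - w * q) by ring. apply ne0_minus.
      rewrite Cmod_mult. pose proof (Cmod_ge_0 w). pose proof (Cmod_ge_0 q). nra.
    - exists (1 - Cmod q)%R. split. lra. intros w Hw.
      replace (q + 0 * w) with q by ring. replace (1 + - q * w) with (1 - q * w) by ring.
      eapply Rle_trans. 2: apply Cmod_1m_ge. rewrite Cmod_mult.
      pose proof (Cmod_ge_0 q). pose proof (Cmod_ge_0 w).
      assert (Cmod q * Cmod w <= Cmod q * (1 - Cmod q))%R by (apply Rmult_le_compat_l; lra).
      nra.
    - exact Hz. }
  rewrite E. apply FR1_conv; assumption.
Qed.

Theorem theorem1p1 :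
  exists r : R, (0 < r)%R /\
  forall q z : Complex.C, (Cmod q < 1)%R -> (Cmod z < r)%R ->
    (exists L1 : Complex.C,
        is_series (fun m : nat =>
          let n := S m in
          Cdiv (cpow q n)
               (Cmult (qpoch (Cmult z (cpow q n)) q (S n))
                      (qpoch_inf (Cmult z (cpow q (2 * n + 2))) (Cmult q q)))) L1
     /\ is_series (fun n : nat =>
          Cdiv (Cmult (cpow z n) (cpow q (2 * n * n + 2 * n + 1)))
               (Cmult (qpoch q (Cmult q q) (S n))
                      (qpoch (Cmult z q) (Cmult q q) (S n)))) L1)
    /\
    (exists T : Complex.C,
        is_series (fun n : nat =>
          Cmult (cpow q n)
            (Cmult (qpoch (Copp (Cmult z (cpow q (S n)))) q n)
                   (qpoch_inf (Copp (Cmult z (cpow q (2 * n + 2)))) (Cmult q q)))) T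
     /\ is_series (fun n : nat =>
          Cdiv (Cmult (cpow z n) (cpow q (n * n + n)))
               (qpoch q (Cmult q q) (S n))) T).
Proof.
  exists 1%R. split. lra. intros q z Hq Hz. split.
  - exact (first_identity q z Hq Hz).
  - exact (second_identity q z Hq Hz).
Qed.
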